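(* Let $\Omega$ be a set; all groups below are $\Omega$-groups. (1) Let $G$ be an $\Omega$-group, $I$ a set, and $(H_i)_{i\in I}$ a family of $\Omega$-subgroups of $G$ satisfying (CC) and such that $\theta^H_G\colon\bigoplus_{i\in I}H_i\to G$ is bijective. Let $S$ be any simple $\Omega$-group. Then: (a) $\operatorname{soc}(H_i)$ is an $\Omega$-subgroup of $\operatorname{soc}(G)$ and $(H_i)_S$ is an $\Omega$-subgroup of $G_S$ for every $i\in I$; (b) the families $(\operatorname{soc}(H_i))_{i\in I}$ (of $\Omega$-subgroups of $\operatorname{soc}(G)$) and $((H_i)_S)_{i\in I}$ (of $\Omega$-subgroups of $G_S$) satisfy (CC); (c) the canonical morphisms $\bigoplus_{i\in I}\operatorname{soc}(H_i)\to\operatorname{soc}(G)$ and $\bigoplus_{i\in I}(H_i)_S\to G_S$ (whose composition with each canonical injection is the corresponding inclusion) are bijective; (d) $\operatorname{Supp}(G)=\bigcup_{i\in I}\operatorname{Supp}(H_i)$. (2) For every $\Omega$-group $G$ and every simple $\Omega$-group $S$, one has $G_S=(\operatorname{soc}(G))_S$ and $\operatorname{Supp}(G)=\operatorname{Supp}(\operatorname{soc}(G))$. (3) Let $G$ and $G'$ be semisimple $\Omega$-groups and put $\mathcal{S}=\operatorname{Supp}(G)\cap\operatorname{Supp}(G')$. Then: (a) for every normal morphism $f\colon G\to G'$ and every simple $\Omega$-group $S$, the $S$-component $f_S\colon G_S\to G'_S$ is a normal morphism; (b) the map $$\Phi\colon \operatorname{Hom}_n(G,G')\to\prod_{S\in\mathcal{S}}\operatorname{Hom}_n(G_S,G'_S),\qquad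 \Phi(f)=(f_S)_{S\in\mathcal{S}},$$ is a bijection.
   Context: An $\Omega$-group is a group $G$ with a map $\Omega\times G\to G$, $(\omega,x)\mapsto x^\omega$, such that each $x\mapsto x^\omega$ is an endomorphism; morphisms are homomorphisms commuting with the operators; $\Omega$-subgroups are operator-stable subgroups. An $\Omega$-group is simple if it is nontrivial and has no normal $\Omega$-subgroups other than the trivial one and itself. For an $\Omega$-group $G$, $\mathcal{Z}(G)$ is the set of normal $\Omega$-subgroups of $G$ that are simple $\Omega$-groups; $\operatorname{soc}(G)$ is the $\Omega$-subgroup generated by $\bigcup\mathcal{Z}(G)$; for a simple $\Omega$-group $S$, $G_S$ is the $\Omega$-subgroup generated by the union of all $H\in\mathcal{Z}(G)$ isomorphic to $S$. For each $\Omega$-group $H$, $[H]$ denotes a canonically chosen representative of its isomorphism class ($[H]\cong H$, $[[H]]=[H]$, $[H]=[K]$ iff $H\cong K$), and $\operatorname{Supp}(G)=\{[H]:H\in\mathcal{Z}(G)\}$. $G$ is semisimple if $G=\operatorname{soc}(G)$ (equivalently, $G$ is isomorphic to a restricted direct sum of simple $\Omega$-groups). The restricted direct sum $\bigoplus_{i\in I}G_i$ is the $\Omega$-subgroup of $\prod_i G_i$ (componentwise operators) of finitely supported families. A family $(H_i)_{i\in I}$ of $\Omega$-subgroups of $G$ satisfies (CC) if $H_j$ centralises $H_i$ for all distinct $i,j$; then $\theta^H_G\colon\bigoplus_i H_i\to G$ is the unique morphism restricting to the inclusion $H_i\hookrightarrow G$ on each summand. A morphism $f\colon G\to G'$ is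 normal if $f(N)$ is a normal $\Omega$-subgroup of $G'$ for every normal $\Omega$-subgroup $N$ of $G$; $\operatorname{Hom}_n(G,G')$ is the set of normal morphisms $G\to G'$. For a normal morphism $f\colon G\to G'$ and a simple $\Omega$-group $S$ one has $f(G_S)\subseteq G'_S$, and the $S$-component $f_S\colon G_S\to G'_S$ is the restriction of $f$ to $G_S$ with codomain $G'_S$. *)

(* Defs.v *)
From Stdlib Require Import List ProofIrrelevance FunctionalExtensionality ClassicalEpsilon.
Set Implicit Arguments.
Unset Strict Implicit.

Section OmegaGroups.
Variable Om : Type.

Record OGroup : Type := MkOGroup {
  ocar :> Type;
  omul : ocar -> ocar -> ocar;
  oone : ocar;
  oinv : ocar -> ocar;
  oact : Om -> ocar -> ocar;
  omulA : forall x y z, omul x (omul y z) = omul (omul x y) z;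
  omul1g : forall x, omul oone x = x;
  omulVg : forall x, omul (oinv x) x = oone;
  oactM : forall w x y, oact w (omul x y) = omul (oact w x) (oact w y)
}.
Arguments omul : clear implicits.
Arguments oone : clear implicits.
Arguments oinv : clear implicits.
Arguments oact : clear implicits.
Arguments omulA : clear implicits.
Arguments omul1g : clear implicits.
Arguments omulVg : clear implicits.
Arguments oactM : clear implicits.

Section GroupFacts.
Variable G : OGroup.
Lemma omulgV (x : G) : omul G x (oinv G x) = oone G.
Proof.
  rewrite <- (omul1g G (omul G x (oinv G x))).
  rewrite <- (omulVg G (oinv G x)) at 1.
  rewrite <- omulA, (omulA G (oinv G x)), omulVg, omul1g.
  apply omulVg.
Qed.
Lemma omulg1 (x : G) : omul G x (oone G) = x.
Proof. rewrite <- (omulVg G x), omulA, omulgV; apply omul1g. Qed.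
Lemma oidem (x : G) : omul G x x = x -> x = oone G.
Proof.
  intro h. rewrite <- (omul1g G x) at 1. rewrite <- (omulVg G x).
  rewrite <- omulA, h. reflexivity.
Qed.
Lemma oinv1 : oinv G (oone G) = oone G.
Proof. rewrite <- (omulg1 (oinv G (oone G))). apply omulVg. Qed.
Lemma oact1 w : oact G w (oone G) = oone G.
Proof. apply oidem. rewrite <- oactM, omul1g. reflexivity. Qed.
End GroupFacts.

Record OSub (G : OGroup) : Type := MkOSub {
  smem : G -> Prop;
  smem1 : smem (oone G);
  smemM : forall x y, smem x -> smem y -> smem (omul G x y);
  smemV : forall x, smem x -> smem (oinv G x);
  smemA : forall w x, smem x -> smem (oact G w x)
}.
Arguments smem {G} o _.
Arguments smem1 {G} o.
Arguments smemM {G} o {x y} _ _.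
Arguments smemV {G} o {x} _.
Arguments smemA {G} o w {x} _.

Lemma sig_ext (A : Type) (P : A -> Prop) (a b : sig P) :
  proj1_sig a = proj1_sig b -> a = b.
Proof.
  destruct a as [a pa], b as [b pb]; simpl; intros ->.
  f_equal; apply proof_irrelevance.
Qed.

Definition subG (G : OGroup) (H : OSub G) : OGroup.
Proof.
  refine (@MkOGroup {x : G | smem H x}
    (fun a b => exist _ (omul G (proj1_sig a) (proj1_sig b))
                   (smemM H (proj2_sig a) (proj2_sig b)))
    (exist _ (oone G) (smem1 H))
    (fun a => exist _ (oinv G (proj1_sig a)) (smemV H (proj2_sig a)))
    (fun w a => exist _ (oact G w (proj1_sig a)) (smemA H w (proj2_sig a)))
    _ _ _ _).
  - intros; apply sig_ext; simpl; apply omulA.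
  - intros; apply sig_ext; simpl; apply omul1g.
  - intros; apply sig_ext; simpl; apply omulVg.
  - intros; apply sig_ext; simpl; apply oactM.
Defined.

Definition sv (G : OGroup) (H : OSub G) (x : subG H) : G := proj1_sig x.

Definition conjg (G : OGroup) (y x : G) : G := omul G (omul G (oinv G y) x) y.

Definition normalP (G : OGroup) (P : G -> Prop) : Prop :=
  forall x y : G, P x -> P (conjg y x).
Definition normal (G : OGroup) (N : OSub G) : Prop := normalP (smem N).

Definition simple (G : OGroup) : Prop :=
  (exists x : G, x <> oone G) /\
  forall N : OSub G, normal N ->
    (forall x, smem N x -> x = oone G) \/ (forall x, smem N x).

Definition morphism (G K : OGroup) (f : G -> K) : Prop :=
  (forall x y, f (omul G x y) = omul K (f x) (f y)) /\
  (forall w x, f (oact G w x) = oact K w (f x)).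

Definition bij (A B : Type) (f : A -> B) : Prop :=
  (forall x y, f x = f y -> x = y) /\ (forall y, exists x, f x = y).

Definition iso (G K : OGroup) : Prop := exists f : G -> K, morphism f /\ bij f.

Definition normal_mor (G K : OGroup) (f : G -> K) : Prop :=
  morphism f /\
  forall N : OSub G, normal N -> normalP (fun y : K => exists x, smem N x /\ f x = y).

Definition gen (G : OGroup) (A : G -> Prop) : OSub G.
Proof.
  refine (@MkOSub G (fun x => forall K : OSub G, (forall a, A a -> smem K a) -> smem K x)
            _ _ _ _).
  - intros K _; apply smem1.
  - intros x y hx hy K hK; apply smemM; auto.
  - intros x hx K hK; apply smemV; auto.
  - intros w x hx K hK; apply smemA; auto.
Defined.

Definition inZ (G : OGroup) (N : OSub G) : Prop := normal N /\ simple (subG N).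

Definition soc (G : OGroup) : OSub G :=
  gen (fun x : G => exists N : OSub G, inZ N /\ smem N x).

Definition semisimple (G : OGroup) : Prop := forall x : G, smem (soc G) x.

Definition GS (G : OGroup) (S : OGroup) : OSub G :=
  gen (fun x : G => exists N : OSub G, inZ N /\ iso (subG N) S /\ smem N x).

(** canonical representative [H] of the isomorphism class of H *)
Definition rep (H : OGroup) : OGroup :=
  epsilon (inhabits H) (fun K => iso H K).

Definition Supp (G : OGroup) : OGroup -> Prop :=
  fun X => exists N : OSub G, inZ N /\ rep (subG N) = X.

Definition up (G : OGroup) (H : OSub G) (K : OSub (subG H)) : OSub G.
Proof.
  refine (@MkOSub G (fun x => exists y : subG H, smem K y /\ sv y = x) _ _ _ _).
  - exists (oone (subG H)); split; [apply smem1 | reflexivity].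
  - intros x y [a [ha <-]] [b [hb <-]].
    exists (omul (subG H) a b); split; [apply smemM; assumption | reflexivity].
  - intros x [a [ha <-]].
    exists (oinv (subG H) a); split; [apply smemV; assumption | reflexivity].
  - intros w x [a [ha <-]].
    exists (oact (subG H) w a); split; [apply smemA; assumption | reflexivity].
Defined.

(** an Omega-subgroup B of G, seen inside the Omega-group A <= G (i.e. B :&: A) *)
Definition restr (G : OGroup) (A B : OSub G) : OSub (subG A).
Proof.
  refine (@MkOSub (subG A) (fun y => smem B (sv y)) _ _ _ _).
  - apply smem1.
  - intros x y hx hy; apply (smemM B hx hy).
  - intros x hx; apply (smemV B hx).
  - intros w x hx; apply (smemA B w hx).
Defined.

Definition CC (X : OGroup) (I : Type) (K : I -> OSub X) : Prop :=
  forall i j, i <> j -> forall x y : X, smem (K i) x -> smem (K j) y ->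
    omul X y x = omul X x y.

Definition finsupp (I : Type) (F : I -> OGroup) (f : forall i, F i) : Prop :=
  exists l : list I, forall i, ~ In i l -> f i = oone (F i).

Section DSum.
Variables (I : Type) (F : I -> OGroup).

Lemma finsupp_mul (a b : forall i, F i) :
  finsupp a -> finsupp b -> finsupp (fun i => omul (F i) (a i) (b i)).
Proof.
  intros [la ha] [lb hb]; exists (la ++ lb); intros i hi.
  rewrite ha, hb; [apply omul1g | | ];
    intro; apply hi; apply in_or_app; auto.
Qed.
Lemma finsupp_one : finsupp (fun i => oone (F i)).
Proof. exists nil; intros; reflexivity. Qed.
Lemma finsupp_inv (a : forall i, F i) :
  finsupp a -> finsupp (fun i => oinv (F i) (a i)).
Proof. intros [la ha]; exists la; intros i hi; rewrite ha by assumption; apply oinv1. Qed.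
Lemma finsupp_act w (a : forall i, F i) :
  finsupp a -> finsupp (fun i => oact (F i) w (a i)).
Proof. intros [la ha]; exists la; intros i hi; rewrite ha by assumption; apply oact1. Qed.

Definition dcar := {f : forall i, F i | finsupp f}.
Definition dmul (a b : dcar) : dcar :=
  exist _ _ (finsupp_mul (proj2_sig a) (proj2_sig b)).
Definition done : dcar := exist _ _ finsupp_one.
Definition dinv (a : dcar) : dcar := exist _ _ (finsupp_inv (proj2_sig a)).
Definition dact w (a : dcar) : dcar := exist _ _ (finsupp_act w (proj2_sig a)).

Definition dsum : OGroup.
Proof.
  refine (@MkOGroup dcar dmul done dinv dact _ _ _ _);
  intros; apply sig_ext; simpl; apply functional_extensionality_dep; intro.
  - apply omulA.
  - apply omul1g.
  - apply omulVg.
  - apply oactM.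
Defined.
End DSum.

Definition dcomp (I : Type) (F : I -> OGroup) (x : dsum F) (i : I) : F i :=
  proj1_sig x i.

(** th is the canonical morphism theta^K : (+)_i K_i -> X, i.e. a morphism
    whose composition with each canonical injection (elements supported
    in {i}) is the inclusion K_i -> X *)
Definition canonical_mor (X : OGroup) (I : Type) (K : I -> OSub X)
    (th : dsum (fun i => subG (K i)) -> X) : Prop :=
  morphism th /\
  forall (x : dsum (fun i => subG (K i))) (i : I),
    (forall j, j <> i -> dcomp x j = oone (subG (K j))) ->
    th x = sv (dcomp x i).

End OmegaGroups.

Arguments canonical_mor {Om X I} K th.

(* Main.v *)
Require Import Defs.
From Stdlib Require Import List ProofIrrelevance FunctionalExtensionality ClassicalEpsilon Classical PropExtensionality.
Set Implicit Arguments.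
Unset Strict Implicit.

Notation "x ** y" := (omul x y) (at level 40, left associativity).

Section Basic.
Context {Om : Type}.

Section G.
Variable G : OGroup Om.
Implicit Types x y z : G.

Lemma mulKl x y z : x ** y = x ** z -> y = z.
Proof.
  intro h. rewrite <- (omul1g y), <- (omul1g z), <- (omulVg x), <- !omulA, h. reflexivity.
Qed.
Lemma mulKr x y z : y ** x = z ** x -> y = z.
Proof.
  intro h. rewrite <- (omulg1 y), <- (omulg1 z), <- (omulgV x), !omulA, h. reflexivity.
Qed.
Lemma inv_uniq x y : x ** y = oone G -> y = oinv x.
Proof. intro h. apply (mulKl (x:=x)). rewrite h, omulgV. reflexivity. Qed.
Lemma inv_uniq_l x y : x ** y = oone G -> x = oinv y.
Proof. intro h. apply (mulKr (x:=y)). rewrite h, omulVg. reflexivity. Qed.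
Lemma inv_inv x : oinv (oinv x) = x.
Proof. symmetry. apply inv_uniq. apply omulVg. Qed.
Lemma inv_mul x y : oinv (x ** y) = oinv y ** oinv x.
Proof.
  symmetry. apply inv_uniq. rewrite <- omulA, (omulA y), omulgV, omul1g, omulgV. reflexivity.
Qed.
Lemma act_inv w x : oact w (oinv x) = oinv (oact w x).
Proof. apply inv_uniq. rewrite <- oactM, omulgV, oact1. reflexivity. Qed.
Lemma inv_eq1 x : oinv x = oone G -> x = oone G.
Proof. intro h. rewrite <- (inv_inv x), h. apply oinv1. Qed.
Lemma mul_eq1 x y : x ** y = oone G -> x = oinv y.
Proof. apply inv_uniq_l. Qed.

Lemma conjg_mul y a b : conjg y (a ** b) = conjg y a ** conjg y b.
Proof.
  unfold conjg. rewrite <- !omulA. f_equal. f_equal.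
  rewrite !omulA, omulgV, omul1g. reflexivity.
Qed.
Lemma conjg_mulg y1 y2 x : conjg (y1 ** y2) x = conjg y2 (conjg y1 x).
Proof. unfold conjg. rewrite inv_mul, !omulA. reflexivity. Qed.
Lemma conjg1 x : conjg (oone G) x = x.
Proof. unfold conjg. rewrite oinv1, omul1g, omulg1. reflexivity. Qed.
Lemma conjg_comm y x : x ** y = y ** x -> conjg y x = x.
Proof. unfold conjg. intro h. rewrite <- omulA, h, omulA, omulVg, omul1g. reflexivity. Qed.
Lemma conjg_inv y x : conjg y (oinv x) = oinv (conjg y x).
Proof. apply inv_uniq. rewrite <- conjg_mul, omulgV. unfold conjg. rewrite omulg1, omulVg. reflexivity. Qed.
Lemma conjgK y x : conjg (oinv y) (conjg y x) = x.
Proof. rewrite <- conjg_mulg, omulgV. apply conjg1. Qed.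
Lemma conjg_one y : conjg y (oone G) = oone G.
Proof. unfold conjg. rewrite omulg1, omulVg. reflexivity. Qed.
Lemma conjg_eq1 y x : conjg y x = oone G -> x = oone G.
Proof. intro h. rewrite <- (conjgK y x), h. apply conjg_one. Qed.
Lemma conjg_act w y x : oact w (conjg y x) = conjg (oact w y) (oact w x).
Proof. unfold conjg. rewrite !oactM, act_inv. reflexivity. Qed.
Lemma comm_of_commut x y : oinv x ** oinv y ** x ** y = oone G -> x ** y = y ** x.
Proof.
  intro h. transitivity ((y ** x) ** (oinv x ** oinv y ** x ** y)).
  - rewrite !omulA, <- (omulA y x (oinv x)), omulgV, omulg1, omulgV, omul1g. reflexivity.
  - rewrite h, omulg1. reflexivity.
Qed.
End G.

Definition inclS {G : OGroup Om} (A B : OSub G) := forall x, smem A x -> smem B x.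

Lemma smemV' {G : OGroup Om} (A : OSub G) x : smem A (oinv x) -> smem A x.
Proof. intro h. rewrite <- (inv_inv x). apply smemV; auto. Qed.
Lemma smem_mulr {G : OGroup Om} (A : OSub G) x y : smem A x -> smem A (x ** y) -> smem A y.
Proof. intros h1 h2. replace y with (oinv x ** (x ** y)). apply smemM; auto. apply smemV; auto.
  rewrite omulA, omulVg, omul1g; auto. Qed.
Lemma smem_mull {G : OGroup Om} (A : OSub G) x y : smem A y -> smem A (x ** y) -> smem A x.
Proof. intros h1 h2. replace x with ((x ** y) ** oinv y). apply smemM; auto. apply smemV; auto.
  rewrite <- omulA, omulgV, omulg1; auto. Qed.

Lemma sv_inj {G : OGroup Om} (H : OSub G) (a b : subG H) : sv a = sv b -> a = b.
Proof. apply sig_ext. Qed.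

Lemma mor1 {A B : OGroup Om} (f : A -> B) : morphism f -> f (oone A) = oone B.
Proof. intros [hm _]. apply oidem. rewrite <- hm, omul1g. reflexivity. Qed.
Lemma morV {A B : OGroup Om} (f : A -> B) : morphism f -> forall x, f (oinv x) = oinv (f x).
Proof. intros hf x. apply inv_uniq. rewrite <- (proj1 hf), omulgV. apply mor1; auto. Qed.
Lemma mor_conj {A B : OGroup Om} (f : A -> B) : morphism f -> forall y x, f (conjg y x) = conjg (f y) (f x).
Proof. intros hf y x. unfold conjg. rewrite !(proj1 hf), (morV hf). reflexivity. Qed.
Lemma mor_comp {A B C : OGroup Om} (f : A -> B) (g : B -> C) : morphism f -> morphism g -> morphism (fun x => g (f x)).
Proof. intros [f1 f2] [g1 g2]. split; intros; rewrite ?f1, ?f2, ?g1, ?g2; reflexivity. Qed.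
Lemma mor_sv {G : OGroup Om} (H : OSub G) : morphism (@sv _ _ H).
Proof. split; reflexivity. Qed.

End Basic.
From Stdlib Require Import List ProofIrrelevance FunctionalExtensionality ClassicalEpsilon Classical PropExtensionality.
Set Implicit Arguments.
Unset Strict Implicit.

Section S1.
Context {Om : Type}.

Lemma osub_ext {G : OGroup Om} (A B : OSub G) : (forall x, smem A x <-> smem B x) -> A = B.
Proof.
  destruct A as [a a1 aM aV aA], B as [b b1 bM bV bA]; simpl; intro h.
  assert (a = b) by (apply functional_extensionality; intro; apply propositional_extensionality; auto).
  subst. f_equal; apply proof_irrelevance.
Qed.

Fixpoint prodl {G : OGroup Om} (l : list G) : G :=
  match l with nil => oone G | a :: l => a ** prodl l end.

Lemma prodl_app {G : OGroup Om} (l1 l2 : list G) : prodl (l1 ++ l2) = prodl l1 ** prodl l2.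
Proof. induction l1; simpl. rewrite omul1g; auto. rewrite IHl1, omulA; auto. Qed.

Definition words {G : OGroup Om} (A : G -> Prop) (hi : forall a, A a -> A (oinv a))
  (ha : forall w a, A a -> A (oact w a)) : OSub G.
Proof.
  refine (@MkOSub _ G (fun x => exists l, Forall A l /\ x = prodl l) _ _ _ _).
  - exists nil; split; auto.
  - intros x y [l1 [h1 ->]] [l2 [h2 ->]]. exists (l1 ++ l2); split.
    apply Forall_app; auto. rewrite prodl_app; auto.
  - intros x [l [h ->]]. exists (rev (map (@oinv _ G) l)). split.
    + apply Forall_rev. apply Forall_map. eapply Forall_impl; [|exact h]. auto.
    + induction l; simpl. apply oinv1. inversion h; subst.
      rewrite prodl_app, <- IHl by auto. simpl. rewrite omulg1, inv_mul. auto.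
  - intros w x [l [h ->]]. exists (map (oact w) l). split.
    + apply Forall_map. eapply Forall_impl; [|exact h]. auto.
    + induction l; simpl. apply oact1. inversion h; subst. rewrite oactM, IHl; auto.
Defined.

Lemma gen_min {G : OGroup Om} (A : G -> Prop) (K : OSub G) x :
  smem (gen A) x -> (forall a, A a -> smem K a) -> smem K x.
Proof. intros h hK. exact (h K hK). Qed.
Lemma gen_in {G : OGroup Om} (A : G -> Prop) a : A a -> smem (gen A) a.
Proof. intros h K hK. auto. Qed.

Lemma gen_words {G : OGroup Om} (A : G -> Prop) (hi : forall a, A a -> A (oinv a))
  (ha : forall w a, A a -> A (oact w a)) x :
  smem (gen A) x -> exists l, Forall A l /\ x = prodl l.
Proof.
  intro h. apply (h (words hi ha)). intros a ha'. exists (a :: nil). simpl.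
  split; auto. rewrite omulg1; auto.
Qed.

Lemma gen_ind {G : OGroup Om} (A : G -> Prop) (hi : forall a, A a -> A (oinv a))
  (ha : forall w a, A a -> A (oact w a)) (P : G -> Prop) :
  P (oone G) -> (forall a x, A a -> P x -> P (a ** x)) -> forall x, smem (gen A) x -> P x.
Proof.
  intros h1 hs x hx. destruct (gen_words hi ha hx) as [l [hl ->]].
  clear hx. induction l; simpl. exact h1. inversion hl; subst. apply hs. assumption. apply IHl. assumption.
Qed.

Lemma gen_normal {G : OGroup Om} (A : G -> Prop) (hi : forall a, A a -> A (oinv a))
  (ha : forall w a, A a -> A (oact w a)) (hc : forall y a, A a -> A (conjg y a)) :
  normal (gen A).
Proof.
  intros x y hx. revert x hx. apply (gen_ind hi ha (P := fun x => smem (gen A) (conjg y x))).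
  - rewrite conjg_one. apply smem1.
  - intros a x h1 h2. rewrite conjg_mul. apply smemM; auto. apply gen_in; auto.
Qed.

Definition trivS (G : OGroup Om) : OSub G.
Proof.
  refine (@MkOSub _ G (fun x => x = oone G) _ _ _ _); intros; subst.
  reflexivity. apply omul1g. apply oinv1. apply oact1.
Defined.

Definition capS {G : OGroup Om} (A B : OSub G) : OSub G.
Proof.
  refine (@MkOSub _ G (fun x => smem A x /\ smem B x) _ _ _ _).
  - split; apply smem1.
  - intros x y [] []; split; apply smemM; auto.
  - intros x []; split; apply smemV; auto.
  - intros w x []; split; apply smemA; auto.
Defined.

Definition imgS {A B : OGroup Om} (f : A -> B) (hf : morphism f) (M : OSub A) : OSub B.
Proof.
  refine (@MkOSub _ B (fun b => exists a, smem M a /\ f a = b) _ _ _ _).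
  - exists (oone A); split. apply smem1. apply mor1; auto.
  - intros x y [a [ha <-]] [b [hb <-]]. exists (a ** b); split. apply smemM; auto. apply hf.
  - intros x [a [ha <-]]. exists (oinv a); split. apply smemV; auto. apply morV; auto.
  - intros w x [a [ha <-]]. exists (oact w a); split. apply smemA; auto. apply hf.
Defined.

Definition kerS {A B : OGroup Om} (f : A -> B) (hf : morphism f) : OSub A.
Proof.
  refine (@MkOSub _ A (fun a => f a = oone B) _ _ _ _).
  - apply mor1; auto.
  - intros x y h1 h2. rewrite (proj1 hf), h1, h2. apply omul1g.
  - intros x h. rewrite (morV hf), h. apply oinv1.
  - intros w x h. rewrite (proj2 hf), h. apply oact1.
Defined.

Definition fullS (G : OGroup Om) : OSub G.
Proof. refine (@MkOSub _ G (fun _ => True) _ _ _ _); auto. Defined.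

Lemma bij_inv {A B : Type} (f : A -> B) : bij f ->
  exists g : B -> A, (forall x, g (f x) = x) /\ (forall y, f (g y) = y).
Proof.
  intros [hi hs]. exists (fun y => proj1_sig (constructive_indefinite_description _ (hs y))).
  split.
  - intro x. apply hi. destruct (constructive_indefinite_description _ (hs (f x))); auto.
  - intro y. destruct (constructive_indefinite_description _ (hs y)); auto.
Qed.

Lemma mor_inv {A B : OGroup Om} (f : A -> B) (g : B -> A) :
  morphism f -> (forall x, g (f x) = x) -> (forall y, f (g y) = y) -> morphism g.
Proof.
  intros [h1 h2] gf fg. split.
  - intros x y. rewrite <- (fg x), <- (fg y) at 1. rewrite <- h1. apply gf.
  - intros w x. rewrite <- (fg x) at 1. rewrite <- h2. apply gf.
Qed.

Lemma iso_refl (A : OGroup Om) : iso A A.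
Proof. exists (fun x => x). split. split; auto. split; eauto. Qed.
Lemma iso_sym (A B : OGroup Om) : iso A B -> iso B A.
Proof.
  intros [f [hf hb]]. destruct (bij_inv hb) as [g [gf fg]]. exists g. split.
  eapply mor_inv; eauto. split.
  - intros x y h. rewrite <- (fg x), <- (fg y), h; auto.
  - intro y. exists (f y); auto.
Qed.
Lemma iso_trans (A B C : OGroup Om) : iso A B -> iso B C -> iso A C.
Proof.
  intros [f [hf [fi fs]]] [g [hg [gi gs]]]. exists (fun x => g (f x)). split.
  apply mor_comp; auto. split.
  - intros x y h. auto.
  - intro z. destruct (gs z) as [y <-]. destruct (fs y) as [x <-]. eauto.
Qed.

Lemma mor_inj1 {A B : OGroup Om} (f : A -> B) : morphism f ->
  (forall x, f x = oone B -> x = oone A) -> forall x y, f x = f y -> x = y.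
Proof.
  intros hf h x y e. apply (mulKr (x := oinv y)). rewrite omulgV. apply h.
  rewrite (proj1 hf), e, (morV hf), omulgV. reflexivity.
Qed.

Lemma simple_iso (A B : OGroup Om) : simple A -> iso A B -> simple B.
Proof.
  intros [[x0 hx0] hs] hi. apply iso_sym in hi. destruct hi as [g [hg [gi gs]]].
  destruct (bij_inv (conj gi gs)) as [f [fg gf]].
  split.
  - exists (f x0). intro e. apply hx0. rewrite <- (gf x0), e. apply mor1; auto.
  - intros N hN.
    pose (N' := imgS hg N).
    assert (nN' : normal N').
    { intros a y [b [hb <-]]. exists (conjg (f y) b). split. apply hN; auto.
      rewrite (mor_conj hg), gf. reflexivity. }
    destruct (hs N' nN') as [h | h]; [left | right].
    + intros x hx. apply gi. rewrite (mor1 hg). apply h. exists x; auto.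
    + intro x. destruct (h (g x)) as [b [hb e]]. apply gi in e. subst; auto.
Qed.

Lemma iso_up {G : OGroup Om} (H : OSub G) (N : OSub (subG H)) : iso (subG (up N)) (subG N).
Proof.
  apply iso_sym.
  unshelve eexists (fun y : subG N => exist _ (sv (sv y)) _).
  { exists (sv y). split; [exact (proj2_sig y) | reflexivity]. }
  split. split; intros; apply sig_ext; reflexivity.
  split.
  - intros x y e. apply (f_equal (@sv _ _ _)) in e. simpl in e.
    apply sig_ext, sig_ext. exact e.
  - intros [x [y [hy e]]]. exists (exist _ y hy). apply sig_ext. simpl. auto.
Qed.

Lemma iso_restr {G : OGroup Om} (A N : OSub G) : inclS N A -> iso (subG (restr A N)) (subG N).
Proof.
  intro hNA. apply iso_sym.
  unshelve eexists (fun y : subG N => exist _ (exist _ (sv y) _) _).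
  { apply hNA. exact (proj2_sig y). }
  { exact (proj2_sig y). }
  split. split; intros; apply sig_ext, sig_ext; reflexivity.
  split.
  - intros x y e. apply (f_equal (fun z => sv (sv z))) in e. simpl in e. apply sig_ext; exact e.
  - intros [[x hx] hx']. exists (exist _ x hx'). apply sig_ext, sig_ext. reflexivity.
Qed.

Lemma iso_img {A B : OGroup Om} (f : A -> B) (hf : morphism f) (M : OSub A) :
  (forall x y, smem M x -> smem M y -> f x = f y -> x = y) -> iso (subG M) (subG (imgS hf M)).
Proof.
  intro hinj.
  unshelve eexists (fun y : subG M => exist _ (f (sv y)) _).
  { exists (sv y). split; [exact (proj2_sig y) | reflexivity]. }
  split. split; intros; apply sig_ext; simpl; apply hf.
  split.
  - intros x y e. apply (f_equal (@sv _ _ _)) in e. simpl in e.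
    apply sig_ext. apply hinj; auto. exact (proj2_sig x). exact (proj2_sig y).
  - intros [b [a [ha e]]]. exists (exist _ a ha). apply sig_ext. simpl. auto.
Qed.

Lemma simple_mor {G B : OGroup Om} (M : OSub G) (f : G -> B) (hf : morphism f) :
  simple (subG M) ->
  (forall x, smem M x -> f x = oone B) \/ (forall x y, smem M x -> smem M y -> f x = f y -> x = y).
Proof.
  intros [_ hs]. pose (K := restr M (kerS hf)).
  assert (nK : normal K).
  { intros x y hx. change (f (conjg (sv y) (sv x)) = oone B). rewrite (mor_conj hf).
    change (f (sv x) = oone B) in hx. rewrite hx. apply conjg_one. }
  destruct (hs K nK) as [h | h]; [right | left].
  - intros x y hx hy e.
    assert (e' : f (x ** oinv y) = oone B) by (rewrite (proj1 hf), (morV hf), e; apply omulgV).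
    specialize (h (exist _ _ (smemM hx (smemV hy))) e').
    apply (f_equal (@sv _ _ _)) in h. simpl in h.
    apply (mulKr (x := oinv y)). rewrite h, omulgV. reflexivity.
  - intros x hx. exact (h (exist _ x hx)).
Qed.

Lemma simple_nontriv {G : OGroup Om} (M : OSub G) : simple (subG M) -> exists x, smem M x /\ x <> oone G.
Proof.
  intros [[x hx] _]. exists (sv x). split. exact (proj2_sig x). intro e. apply hx. apply sig_ext. exact e.
Qed.

Lemma simple_meet {G : OGroup Om} (M P : OSub G) : simple (subG M) ->
  (forall x y, smem P x -> smem M y -> smem P (conjg y x)) ->
  (forall x, smem M x -> smem P x -> x = oone G) \/ inclS M P.
Proof.
  intros [_ hs] hP. pose (K := restr M P).
  assert (nK : normal K). { intros x y hx. apply hP; auto. exact (proj2_sig y). }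
  destruct (hs K nK) as [h | h]; [left | right].
  - intros x hx hx'. specialize (h (exist _ x hx) hx'). apply (f_equal (@sv _ _ _)) in h. exact h.
  - intros x hx. exact (h (exist _ x hx)).
Qed.

End S1.
From Stdlib Require Import List ProofIrrelevance FunctionalExtensionality ClassicalEpsilon Classical PropExtensionality.
Set Implicit Arguments.
Unset Strict Implicit.

Definition Zgen {Om} {G : OGroup Om} (P : OSub G -> Prop) : G -> Prop :=
  fun x => exists N, inZ N /\ P N /\ smem N x.
Definition genP {Om} (G : OGroup Om) (P : OSub G -> Prop) : OSub G := gen (Zgen P).
Arguments genP {Om} G P.

Section S2.
Context {Om : Type}.

Section G.
Variable G : OGroup Om.

Lemma Zgen_inv (P : OSub G -> Prop) a : Zgen P a -> Zgen P (oinv a).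
Proof. intros [N [h1 [h2 h3]]]. exists N; split; [|split]; auto. apply smemV; auto. Qed.
Lemma Zgen_act (P : OSub G -> Prop) w a : Zgen P a -> Zgen P (oact w a).
Proof. intros [N [h1 [h2 h3]]]. exists N; split; [|split]; auto. apply smemA; auto. Qed.
Lemma Zgen_conj (P : OSub G -> Prop) y a : Zgen P a -> Zgen P (conjg y a).
Proof. intros [N [h1 [h2 h3]]]. exists N; split; [|split]; auto. apply (proj1 h1); auto. Qed.

Lemma genP_ind (P : OSub G -> Prop) (Q : G -> Prop) :
  Q (oone G) -> (forall a x, Zgen P a -> Q x -> Q (a ** x)) -> forall x, smem (genP G P) x -> Q x.
Proof. apply gen_ind. apply Zgen_inv. apply Zgen_act. Qed.

Lemma genP_normal (P : OSub G -> Prop) : normal (genP G P).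
Proof. apply gen_normal. apply Zgen_inv. apply Zgen_act. apply Zgen_conj. Qed.

Lemma genP_in (P : OSub G -> Prop) N x : inZ N -> P N -> smem N x -> smem (genP G P) x.
Proof. intros. apply gen_in. exists N; auto. Qed.

Lemma genP_mono (P Q : OSub G -> Prop) : (forall N, inZ N -> P N -> Q N) -> inclS (genP G P) (genP G Q).
Proof.
  intros h x hx. apply (gen_min hx). intros a [N [h1 [h2 h3]]]. apply gen_in. exists N; auto.
Qed.

Lemma genP_nil (P : OSub G -> Prop) x : (forall N, inZ N -> ~ P N) -> smem (genP G P) x -> x = oone G.
Proof.
  intros h hx. apply (gen_min (K := trivS G) hx). intros a [N [h1 [h2 h3]]]. exfalso; eapply h; eauto.
Qed.

Lemma soc_eq : soc G = genP G (fun _ => True).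
Proof.
  apply osub_ext. intro x. split; intro h.
  - apply (gen_min h). intros a [N [h1 h2]]. apply gen_in. exists N; auto.
  - apply (gen_min h). intros a [N [h1 [_ h2]]]. apply gen_in. exists N; auto.
Qed.
Lemma GS_eq S : GS G S = genP G (fun N => iso (subG N) S).
Proof.
  apply osub_ext. intro x. split; intro h.
  - apply (gen_min h). intros a [N [h1 h2]]. apply gen_in. exists N; auto.
  - apply (gen_min h). intros a [N [h1 h2]]. apply gen_in. exists N; auto.
Qed.

Lemma normal_capS (A B : OSub G) : normal A -> normal B -> normal (capS A B).
Proof. intros hA hB x y [h1 h2]. split; auto. Qed.

Lemma comm_normal (A B : OSub G) : normal A -> normal B -> (forall x, smem A x -> smem B x -> x = oone G) ->
  forall a b, smem A a -> smem B b -> a ** b = b ** a.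
Proof.
  intros nA nB h a b ha hb. apply comm_of_commut. apply h.
  - replace (oinv a ** oinv b ** a ** b) with (oinv a ** conjg b a)
      by (unfold conjg; rewrite !omulA; auto).
    apply smemM. apply smemV; auto. apply nA; auto.
  - apply smemM; auto. change (smem B (conjg a (oinv b))). apply nB. apply smemV; auto.
Qed.

Lemma comm_1 (x : G) : x ** oone G = oone G ** x.
Proof. rewrite omulg1, omul1g; auto. Qed.
Lemma comm_mul (x a b : G) : x ** a = a ** x -> x ** b = b ** x -> x ** (a ** b) = (a ** b) ** x.
Proof. intros h1 h2. rewrite omulA, h1, <- omulA, h2, omulA. auto. Qed.

Lemma gen_comm (A B : G -> Prop) (hiA : forall a, A a -> A (oinv a)) (haA : forall w a, A a -> A (oact w a))
  (hiB : forall a, B a -> B (oinv a)) (haB : forall w a, B a -> B (oact w a)) :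
  (forall a b, A a -> B b -> a ** b = b ** a) ->
  forall x y, smem (gen A) x -> smem (gen B) y -> x ** y = y ** x.
Proof.
  intros h x y hx hy. revert y hy.
  apply (gen_ind hiA haA (P := fun x => forall y, smem (gen B) y -> x ** y = y ** x)) ; auto.
  - intros y _. symmetry. apply comm_1.
  - intros a x' ha hx' y hy. symmetry. apply comm_mul.
    + symmetry. revert y hy. apply (gen_ind hiB haB (P := fun y => a ** y = y ** a)).
      * apply comm_1.
      * intros b y hb hy. apply comm_mul; auto.
    + symmetry. apply hx'. auto.
Qed.

Lemma Z_meet (M N : OSub G) : inZ M -> inZ N -> M = N \/ (forall x y, smem M x -> smem N y -> x ** y = y ** x).
Proof.
  intros [nM sM] [nN sN].
  destruct (simple_meet sM (P := N)) as [h | h]. { intros; apply nN; auto. }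
  - right. apply comm_normal; auto.
  - destruct (simple_meet sN (P := M)) as [h' | h']. { intros; apply nM; auto. }
    + exfalso. destruct (simple_nontriv sM) as [x [hx hx1]]. apply hx1. apply h'; auto.
    + left. apply osub_ext. intro x; split; auto.
Qed.

End G.
End S2.
From Stdlib Require Import List ProofIrrelevance FunctionalExtensionality ClassicalEpsilon Classical PropExtensionality.
Set Implicit Arguments.
Unset Strict Implicit.

Section S3.
Context {Om : Type}.

Definition imgF {A B : OGroup Om} (f : A -> B) (hf : morphism f) : OSub B.
Proof.
  refine (@MkOSub _ B (fun b => exists a, f a = b) _ _ _ _).
  - exists (oone A). apply mor1; auto.
  - intros x y [a <-] [b <-]. exists (a ** b). apply hf.
  - intros x [a <-]. exists (oinv a). apply morV; auto.
  - intros w x [a <-]. exists (oact w a). apply hf.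
Defined.

Lemma iso_imgF {A B : OGroup Om} (f : A -> B) (hf : morphism f) :
  (forall x y, f x = f y -> x = y) -> iso A (subG (imgF hf)).
Proof.
  intro hinj.
  unshelve eexists (fun y : A => exist _ (f y) _). { exists y; auto. }
  split. split; intros; apply sig_ext; simpl; apply hf.
  split.
  - intros x y e. apply (f_equal (@sv _ _ _)) in e. simpl in e. auto.
  - intros [b [a e]]. exists a. apply sig_ext. simpl. auto.
Qed.

Section G.
Variable G : OGroup Om.

Section Split.
Variables A B : OSub G.
Hypothesis nA : normal A.
Hypothesis nB : normal B.
Hypothesis htriv : forall x, smem A x -> smem B x -> x = oone G.

Lemma split_comm a b : smem A a -> smem B b -> a ** b = b ** a.
Proof. apply comm_normal; auto. Qed.

Lemma split_uniq a1 b1 a2 b2 : smem A a1 -> smem B b1 -> smem A a2 -> smem B b2 ->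
  a1 ** b1 = a2 ** b2 -> a1 = a2 /\ b1 = b2.
Proof.
  intros h1 h2 h3 h4 e.
  assert (e' : oinv a2 ** a1 = b2 ** oinv b1).
  { apply (mulKl (x := a2)). apply (mulKr (x := b1)).
    rewrite !omulA, omulgV, omul1g, <- omulA, omulVg, omulg1. auto. }
  assert (h : oinv a2 ** a1 = oone G).
  { apply htriv. apply smemM; auto. apply smemV; auto. rewrite e'. apply smemM; auto. apply smemV; auto. }
  assert (a1 = a2). { apply inv_uniq in h. rewrite inv_inv in h. auto. }
  subst. split; auto. apply mulKl in e. auto.
Qed.

Lemma split_mor (M : OSub G) :
  (forall m, smem M m -> exists a b, smem A a /\ smem B b /\ m = a ** b) ->
  exists pa pb : subG M -> G, morphism pa /\ morphism pb /\
    forall m, smem A (pa m) /\ smem B (pb m) /\ sv m = pa m ** pb m.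
Proof.
  intro hM.
  assert (hM' : forall m : subG M, exists p : G * G, smem A (fst p) /\ smem B (snd p) /\ sv m = fst p ** snd p).
  { intro m. destruct (hM (sv m) (proj2_sig m)) as [a [b h]]. exists (a, b). exact h. }
  pose (p := fun m => proj1_sig (constructive_indefinite_description _ (hM' m))).
  assert (hp : forall m, smem A (fst (p m)) /\ smem B (snd (p m)) /\ sv m = fst (p m) ** snd (p m)).
  { intro m. unfold p. destruct (constructive_indefinite_description _ (hM' m)); auto. }
  exists (fun m => fst (p m)), (fun m => snd (p m)).
  assert (hmor : forall x y, fst (p (x ** y)) = fst (p x) ** fst (p y) /\ snd (p (x ** y)) = snd (p x) ** snd (p y)).
  { intros x y. destruct (hp x) as [ax [bx ex]]. destruct (hp y) as [ay [by_ ey]].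
    destruct (hp (x ** y)) as [axy [bxy exy]].
    apply split_uniq; auto. apply smemM; auto. apply smemM; auto.
    rewrite <- exy. change (sv x ** sv y = fst (p x) ** fst (p y) ** (snd (p x) ** snd (p y))).
    rewrite ex, ey. rewrite !omulA. f_equal. rewrite <- !omulA. f_equal.
    symmetry; apply split_comm; auto. }
  assert (hact : forall w x, fst (p (oact w x)) = oact w (fst (p x)) /\ snd (p (oact w x)) = oact w (snd (p x))).
  { intros w x. destruct (hp x) as [ax [bx ex]]. destruct (hp (oact w x)) as [a' [b' e']].
    apply split_uniq; auto. apply smemA; auto. apply smemA; auto.
    rewrite <- e', <- oactM, <- ex. reflexivity. }
  split; [|split].
  - split; intros. apply hmor. apply hact.
  - split; intros. apply hmor. apply hact.
  - exact hp.
Qed.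
End Split.

Definition genL (l : list (OSub G)) := genP G (fun N => In N l).

Lemma genL_normal l : normal (genL l).
Proof. apply genP_normal. Qed.

Lemma genL_sub l N : inclS (genL l) (genL (N :: l)).
Proof. apply genP_mono. simpl; auto. Qed.

Lemma genL_cons l N : inZ N -> forall x, smem (genL (N :: l)) x <->
  exists a b, smem (genL l) a /\ smem N b /\ x = a ** b.
Proof.
  intros hN x. split.
  - apply (genP_ind (Q := fun x => exists a b, smem (genL l) a /\ smem N b /\ x = a ** b)).
    + exists (oone G), (oone G). split; [|split]. apply smem1. apply smem1. rewrite omul1g; auto.
    + intros g y [N' [hN' [hin hg]]] [a [b [ha [hb ->]]]].
      destruct hin as [<- | hin].
      * exists (conjg (oinv g) a), (g ** b). split; [|split].
        -- apply genL_normal; auto.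
        -- apply smemM; auto.
        -- unfold conjg. rewrite inv_inv, !omulA, <- (omulA (g ** a)), omulVg, omulg1. auto.
      * exists (g ** a), b. split; [|split]; auto.
        -- apply smemM; auto. apply genP_in with N'; auto.
        -- rewrite omulA; auto.
  - intros [a [b [ha [hb ->]]]]. apply smemM. apply genL_sub; auto.
    apply genP_in with N; simpl; auto.
Qed.

Lemma genL_nil x : smem (genL nil) x -> x = oone G.
Proof. apply genP_nil. simpl; auto. Qed.

End G.
End S3.
From Stdlib Require Import List ProofIrrelevance FunctionalExtensionality ClassicalEpsilon Classical PropExtensionality.
Set Implicit Arguments.
Unset Strict Implicit.

Section S4.
Context {Om : Type}.

Lemma simple_mor_full {X B : OGroup Om} (f : X -> B) (hf : morphism f) :
  simple X -> (forall x, f x = oone B) \/ (forall x y, f x = f y -> x = y).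
Proof.
  intros [_ hs]. destruct (hs (kerS hf)) as [h | h].
  - intros x y hx. change (f (conjg y x) = oone B). rewrite (mor_conj hf).
    change (f x = oone B) in hx. rewrite hx. apply conjg_one.
  - right. apply mor_inj1; auto.
  - left. exact h.
Qed.

Section G.
Variable G : OGroup Om.

Section Split.
Variables A B : OSub G.
Hypothesis nA : normal A.
Hypothesis nB : normal B.
Hypothesis htriv : forall x, smem A x -> smem B x -> x = oone G.
Variable M : OSub G.
Variables pa pb : subG M -> G.
Hypothesis hpa : morphism pa.
Hypothesis hpb : morphism pb.
Hypothesis hp : forall m, smem A (pa m) /\ smem B (pb m) /\ sv m = pa m ** pb m.

Lemma split_conjB (hn : forall y x, smem B y -> smem M x -> smem M (conjg y x)) :
  forall y m, smem B y -> exists m', pb m' = conjg y (pb m).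
Proof.
  intros y m hy. exists (exist _ (conjg y (sv m)) (hn _ _ hy (proj2_sig m))).
  destruct (hp m) as [ha [hb e]].
  set (m' := exist _ _ _). destruct (hp m') as [ha' [hb' e']].
  assert (pa m' = pa m /\ pb m' = conjg y (pb m)) as [_ ?]; auto.
  apply (split_uniq htriv); try (apply nB); auto.
  rewrite <- e'. simpl. rewrite e, conjg_mul. f_equal. apply conjg_comm.
  apply (split_comm nA nB htriv); auto.
Qed.

Lemma split_conjA (hn : forall y x, smem A y -> smem M x -> smem M (conjg y x)) :
  forall y m, smem A y -> exists m', pa m' = conjg y (pa m).
Proof.
  intros y m hy. exists (exist _ (conjg y (sv m)) (hn _ _ hy (proj2_sig m))).
  destruct (hp m) as [ha [hb e]].
  set (m' := exist _ _ _). destruct (hp m') as [ha' [hb' e']].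
  assert (pa m' = conjg y (pa m) /\ pb m' = pb m) as [? _]; auto.
  apply (split_uniq htriv); try (apply nA); auto.
  rewrite <- e'. simpl. rewrite e, conjg_mul. f_equal. apply conjg_comm.
  symmetry. apply (split_comm nA nB htriv); auto.
Qed.

Lemma split_iso (hn : forall y x, smem B y -> smem M x -> smem M (conjg y x))
  (hinj : forall m1 m2, pb m1 = pb m2 -> m1 = m2) (hsB : simple (subG B))
  (hnt : exists m : subG M, m <> oone (subG M)) : iso (subG M) (subG B).
Proof.
  assert (e : imgF hpb = B).
  { apply osub_ext. intro x. split.
    - intros [m <-]. apply hp.
    - destruct (simple_meet hsB (P := imgF hpb)) as [h | h].
      + intros x' y' [m <-] hy'. destruct (split_conjB hn m hy') as [m' e]. exists m'; auto.
      + exfalso. destruct hnt as [m hm]. apply hm. apply hinj. rewrite (mor1 hpb). apply h.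
        apply hp. exists m; auto.
      + apply h. }
  rewrite <- e. apply iso_imgF. exact hinj.
Qed.
End Split.

Lemma subG_nontriv (M : OSub G) : simple (subG M) -> exists m : subG M, m <> oone (subG M).
Proof. intros [h _]. exact h. Qed.

Theorem KL (l : list (OSub G)) : (forall N, In N l -> inZ N) ->
  forall M : OSub G, simple (subG M) ->
  (forall x y, smem (genL l) y -> smem M x -> smem M (conjg y x)) ->
  inclS M (genL l) ->
  inclS M (genP G (fun N => In N l /\ iso (subG N) (subG M))).
Proof.
  induction l as [|N l IH]; intros hl M sM hnorm hsub x hx.
  - apply hsub in hx. apply genL_nil in hx. subst. apply smem1.
  - assert (hN : inZ N) by (apply hl; left; auto).
    assert (hl' : forall N', In N' l -> inZ N') by (intros; apply hl; right; auto).
    destruct (classic (inclS M (genL l))) as [hs | hns].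
    + apply (genP_mono (P := fun N' => In N' l /\ iso (subG N') (subG M))).
      { intros N' _ [h1 h2]; split; [right|]; auto. }
      apply (IH hl' M sM); auto. intros; apply hnorm; auto; apply genL_sub; auto.
    + apply not_all_ex_not in hns; destruct hns as [m0 hm0].
      apply imply_to_and in hm0; destruct hm0 as [hm0M hm0L].
      assert (hLN : forall y, smem (genL l) y -> smem N y -> y = oone G).
      { destruct (simple_meet (proj2 hN) (P := genL l)) as [h | h].
        { intros; apply genL_normal; auto. }
        - intros; apply h; auto.
        - exfalso. apply hm0L. destruct (genL_cons l hN m0) as [h1 _].
          destruct (h1 (hsub _ hm0M)) as [a [b [ha [hb ->]]]]. apply smemM; auto. }
      assert (hML : forall y, smem M y -> smem (genL l) y -> y = oone G).
      { destruct (simple_meet sM (P := genL l)) as [h | h].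
        { intros; apply genL_normal; auto. }
        - exact h.
        - exfalso; apply hm0L; auto. }
      assert (hM : forall m, smem M m -> exists a b, smem (genL l) a /\ smem N b /\ m = a ** b).
      { intros m hm. apply (genL_cons l hN m). auto. }
      destruct (split_mor (genL_normal (l:=l)) (proj1 hN) hLN hM) as [pa [pb [hpa [hpb hp]]]].
      assert (hinjb : forall m1 m2, pb m1 = pb m2 -> m1 = m2).
      { apply mor_inj1; auto. intros m e. destruct (hp m) as [ha [hb em]].
        rewrite e, omulg1 in em. apply sig_ext. change (sv m = oone G). apply hML. exact (proj2_sig m).
        rewrite em. auto. }
      assert (hnB : forall y x, smem N y -> smem M x -> smem M (conjg y x)).
      { intros y x' hy hx'. apply hnorm; auto. apply genP_in with N; simpl; auto. }
      assert (hnA : forall y x, smem (genL l) y -> smem M x -> smem M (conjg y x)).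
      { intros y x' hy hx'. apply hnorm; auto. apply genL_sub; auto. }
      assert (isoMN : iso (subG M) (subG N)).
      { apply (split_iso (genL_normal (l:=l)) (proj1 hN) hLN hpb hp hnB hinjb (proj2 hN)).
        apply subG_nontriv; auto. }
      assert (hxe : x = pa (exist _ x hx) ** pb (exist _ x hx)) by apply (hp (exist _ x hx)).
      assert (hpbin : smem (genP G (fun N0 => In N0 (N :: l) /\ iso (subG N0) (subG M))) (pb (exist _ x hx))).
      { apply genP_in with N; auto. split; [left; auto | apply iso_sym; auto]. apply hp. }
      destruct (simple_mor_full hpa sM) as [h | h].
      * rewrite hxe, h, omul1g. auto.
      * pose (IA := imgF hpa).
        assert (isoA : iso (subG M) (subG IA)) by (apply iso_imgF; auto).
        assert (sA : simple (subG IA)) by (apply simple_iso with (subG M); auto).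
        assert (hIA : inclS IA (genP G (fun N' => In N' l /\ iso (subG N') (subG IA)))).
        { apply IH; auto.
          - intros x' y hy [m <-]. destruct (split_conjA (genL_normal (l:=l)) (proj1 hN) hLN hp hnA m hy) as [m' e].
            exists m'; auto.
          - intros x' [m <-]. apply hp. }
        rewrite hxe. apply smemM; auto.
        apply (genP_mono (P := fun N' => In N' l /\ iso (subG N') (subG IA))).
        { intros N' _ [h1 h2]. split; [right; auto|]. apply iso_trans with (subG IA); auto. apply iso_sym; auto. }
        apply hIA. exists (exist _ x hx). auto.
Qed.

Corollary KL_weak (l : list (OSub G)) (S : OGroup Om) x :
  smem (genP G (fun N => In N l /\ iso (subG N) S)) x -> x <> oone G ->
  exists N, In N l /\ iso (subG N) S.
Proof.
  intros h hx. apply NNPP. intro hno. apply hx. apply (genP_nil (P := fun N => In N l /\ iso (subG N) S)); auto.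
  intros N _ hN. apply hno. exists N; auto.
Qed.

Theorem KL2 (l : list (OSub G)) : (forall N, In N l -> inZ N) ->
  forall L : OSub G, normal L ->
  forall z, smem L z -> smem (genL l) z -> z <> oone G -> exists M, inZ M /\ inclS M L.
Proof.
  intros hl L nL. induction l as [|N l IH]; intros z hz hzl hz1.
  - apply genL_nil in hzl. contradiction.
  - assert (hN : inZ N) by (apply hl; left; auto).
    assert (hl' : forall N', In N' l -> inZ N') by (intros; apply hl; right; auto).
    destruct (classic (exists z', smem L z' /\ smem (genL l) z' /\ z' <> oone G)) as [[z' [h1 [h2 h3]]] | hno].
    + apply (IH hl' z'); auto.
    + assert (hLl : forall y, smem L y -> smem (genL l) y -> y = oone G).
      { intros y h1 h2. apply NNPP. intro h3. apply hno. exists y; auto. }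
      assert (hLN : forall y, smem (genL l) y -> smem N y -> y = oone G).
      { destruct (simple_meet (proj2 hN) (P := genL l)) as [h | h].
        { intros; apply genL_normal; auto. }
        - intros; apply h; auto.
        - exfalso. apply hz1. apply hLl; auto. destruct (genL_cons l hN z) as [h1 _].
          destruct (h1 hzl) as [a [b [ha [hb ->]]]]. apply smemM; auto. }
      pose (M0 := capS L (genL (N :: l))).
      assert (nM0 : normal M0) by (apply normal_capS; auto; apply genL_normal).
      assert (hM : forall m, smem M0 m -> exists a b, smem (genL l) a /\ smem N b /\ m = a ** b).
      { intros m [_ hm]. apply (genL_cons l hN m). auto. }
      destruct (split_mor (genL_normal (l:=l)) (proj1 hN) hLN hM) as [pa [pb [hpa [hpb hp]]]].
      assert (hinjb : forall m1 m2, pb m1 = pb m2 -> m1 = m2).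
      { apply mor_inj1; auto. intros m e. destruct (hp m) as [ha [hb em]].
        rewrite e, omulg1 in em. apply sig_ext. change (sv m = oone G). apply hLl. exact (proj1 (proj2_sig m)).
        rewrite em. auto. }
      assert (hnB : forall y x, smem N y -> smem M0 x -> smem M0 (conjg y x)).
      { intros y x' hy hx'. apply nM0; auto. }
      assert (isoMN : iso (subG M0) (subG N)).
      { apply (split_iso (genL_normal (l:=l)) (proj1 hN) hLN hpb hp hnB hinjb (proj2 hN)).
        exists (exist _ z (conj hz hzl : smem M0 z)). intro e. apply hz1.
        apply (f_equal (@sv _ _ _)) in e. exact e. }
      exists M0. split.
      * split; auto. apply simple_iso with (subG N). apply hN. apply iso_sym; auto.
      * intros x [h _]; auto.
Qed.

End G.
End S4.
From Stdlib Require Import List ProofIrrelevance FunctionalExtensionality ClassicalEpsilon Classical PropExtensionality.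
Set Implicit Arguments.
Unset Strict Implicit.

Section S5.
Context {Om : Type}.

Lemma rep_iso (H : OGroup Om) : iso H (rep H).
Proof. unfold rep. apply epsilon_spec. exists H. apply iso_refl. Qed.

Lemma rep_eq (A B : OGroup Om) : iso A B -> rep A = rep B.
Proof.
  intro h. unfold rep.
  assert (e : (fun K => iso A K) = (fun K => iso B K)).
  { apply functional_extensionality; intro K. apply propositional_extensionality. split; intro h'.
    apply iso_trans with A; auto. apply iso_sym; auto. apply iso_trans with B; auto. }
  rewrite e. f_equal. apply proof_irrelevance.
Qed.

Lemma rep_eq_iso (A B : OGroup Om) : rep A = rep B -> iso A B.
Proof.
  intro e. apply iso_trans with (rep A). apply rep_iso. rewrite e. apply iso_sym, rep_iso.
Qed.

Section G.
Variable G : OGroup Om.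

Lemma genP_list (P : OSub G -> Prop) x : smem (genP G P) x ->
  exists l, (forall N, In N l -> inZ N /\ P N) /\ smem (genL l) x.
Proof.
  revert x. apply genP_ind.
  - exists nil. split. simpl; tauto. apply smem1.
  - intros a x [N [h1 [h2 h3]]] [l [hl hx]]. exists (N :: l). split.
    + intros N' [<- | h]; auto.
    + apply smemM. apply genP_in with N; simpl; auto. apply genL_sub; auto.
Qed.

Lemma inZ_restr (A N : OSub G) : inZ N -> inclS N A -> inZ (restr A N).
Proof.
  intros [nN sN] hNA. split.
  - intros x y hx. apply nN. exact hx.
  - apply simple_iso with (subG N); auto. apply iso_sym, iso_restr; auto.
Qed.

Lemma inZ_soc N : inZ N -> inclS N (soc G).
Proof. intros hN x hx. apply gen_in. exists N; auto. Qed.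

Lemma Zsoc_list (M : OSub (subG (soc G))) m : inZ M -> smem M m ->
  exists l, (forall N, In N l -> inZ N) /\
    smem (genP G (fun N => In N l /\ iso (subG N) (subG M))) (sv m).
Proof.
  intros [nM sM] hm.
  assert (hs : smem (genP G (fun _ => True)) (sv m)) by (rewrite <- soc_eq; exact (proj2_sig m)).
  destruct (genP_list hs) as [l [hl hml]]. exists l. split. intros; apply hl; auto.
  destruct (classic (sv m = oone G)) as [e | ne]. { rewrite e. apply smem1. }
  pose (U := up M).
  assert (isoU : iso (subG U) (subG M)) by apply iso_up.
  assert (sU : simple (subG U)) by (apply simple_iso with (subG M); auto; apply iso_sym; auto).
  assert (hlsoc : forall y, smem (genL l) y -> smem (soc G) y).
  { intros y hy. rewrite soc_eq. revert hy. apply genP_mono. intros N _ h. auto. }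
  assert (nU : forall x y, smem (genL l) y -> smem U x -> smem U (conjg y x)).
  { intros x y hy [u [hu <-]]. exists (@conjg _ (subG (soc G)) (exist _ y (hlsoc y hy)) u). split.
    apply nM; auto. reflexivity. }
  assert (hUl : inclS U (genL l)).
  { destruct (simple_meet sU (P := genL l)) as [h | h];
      [ intros; apply (genL_normal (l:=l)); auto | | auto ].
    exfalso. apply ne. apply h; auto. exists m; auto. }
  assert (h := KL (l := l) (fun N hN => proj1 (hl N hN)) sU nU hUl).
  assert (hmU : smem U (sv m)) by (exists m; auto).
  specialize (h _ hmU). revert h. apply genP_mono. intros N _ [h1 h2]. split; auto.
  apply iso_trans with (subG U); auto.
Qed.

Theorem part2 (S : OGroup Om) :
  (forall x : G, smem (GS G S) x <-> smem (up (GS (subG (soc G)) S)) x) /\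
  (forall X : OGroup Om, Supp G X <-> Supp (subG (soc G)) X).
Proof.
  split.
  - intro x. split; intro h.
    + apply (gen_min h). intros n [N [hN [hiso hn]]].
      exists (exist _ n (inZ_soc hN hn)). split; [|reflexivity].
      apply gen_in. exists (restr (soc G) N). split; [|split].
      * apply inZ_restr; auto. apply inZ_soc; auto.
      * apply iso_trans with (subG N); auto. apply iso_restr. apply inZ_soc; auto.
      * exact hn.
    + destruct h as [y [hy <-]]. apply (gen_min (K := restr (soc G) (GS G S)) hy).
      intros m [M [hM [hiso hm]]]. change (smem (GS G S) (sv m)).
      destruct (Zsoc_list hM hm) as [l [hl h]].
      rewrite GS_eq. revert h. apply genP_mono. intros N _ [_ h]. apply iso_trans with (subG M); auto.
  - intro X. split.
    + intros [N [hN <-]]. exists (restr (soc G) N). split.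
      * apply inZ_restr; auto. apply inZ_soc; auto.
      * apply rep_eq. apply iso_restr. apply inZ_soc; auto.
    + intros [M [hM <-]].
      destruct (simple_nontriv (proj2 hM)) as [m [hm ne]].
      destruct (Zsoc_list hM hm) as [l [hl h]].
      destruct (KL_weak h) as [N [hN hiso]].
      { intro e. apply ne. apply sig_ext. exact e. }
      exists N. split; auto. apply rep_eq; auto.
Qed.

End G.
End S5.
From Stdlib Require Import List ProofIrrelevance FunctionalExtensionality ClassicalEpsilon Classical PropExtensionality.
Set Implicit Arguments.
Unset Strict Implicit.

Section S6.
Context {Om : Type}.

Lemma comm_weak {G : OGroup Om} (A B : OSub G) :
  (forall x y, smem A x -> smem B y -> smem A (conjg y x)) ->
  (forall x y, smem B x -> smem A y -> smem B (conjg y x)) ->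
  (forall x, smem A x -> smem B x -> x = oone G) ->
  forall a b, smem A a -> smem B b -> a ** b = b ** a.
Proof.
  intros nA nB h a b ha hb. apply comm_of_commut. apply h.
  - replace (oinv a ** oinv b ** a ** b) with (oinv a ** conjg b a)
      by (unfold conjg; rewrite !omulA; auto).
    apply smemM. apply smemV; auto. apply nA; auto.
  - apply smemM; auto. change (smem B (conjg a (oinv b))). apply nB; auto. apply smemV; auto.
Qed.

Lemma Supp_rep (G T : OGroup Om) : Supp G T -> rep T = T.
Proof. intros [N [_ <-]]. apply rep_eq. apply iso_sym, rep_iso. Qed.

Lemma Supp_iso_eq (G T : OGroup Om) (X : OGroup Om) : Supp G T -> iso X T -> rep X = T.
Proof. intros hT hi. rewrite <- (Supp_rep hT). apply rep_eq; auto. Qed.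

Lemma Supp_neq (G G' T U : OGroup Om) : Supp G T -> Supp G' U -> T <> U -> ~ iso T U.
Proof.
  intros hT hU ne hi. apply ne. rewrite <- (Supp_rep hT). apply Supp_iso_eq with G'; auto.
Qed.

Definition CS (G : OGroup Om) (S : OGroup Om) : OSub G := genP G (fun N => ~ iso (subG N) S).

Lemma GS_in (G S : OGroup Om) N x : inZ N -> iso (subG N) S -> smem N x -> smem (GS G S) x.
Proof. intros. apply gen_in. exists N; auto. Qed.
Lemma CS_in (G S : OGroup Om) N x : inZ N -> ~ iso (subG N) S -> smem N x -> smem (CS G S) x.
Proof. intros. apply genP_in with N; auto. Qed.

Lemma GS_CS (G S T : OGroup Om) : ~ iso S T -> inclS (GS G S) (CS G T).
Proof.
  intros ne x hx. rewrite GS_eq in hx. revert hx. apply genP_mono. intros N _ h h'.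
  apply ne. apply iso_trans with (subG N); auto. apply iso_sym; auto.
Qed.

Lemma GS_normal (G S : OGroup Om) : normal (GS G S).
Proof. rewrite GS_eq. apply genP_normal. Qed.
Lemma CS_normal (G S : OGroup Om) : normal (CS G S).
Proof. apply genP_normal. Qed.

Lemma f_Z {G K : OGroup Om} (f : G -> K) (hf : normal_mor f) (N : OSub G) : inZ N ->
  (forall n, smem N n -> f n = oone K) \/
  (inZ (imgS (proj1 hf) N) /\ iso (subG N) (subG (imgS (proj1 hf) N))).
Proof.
  intros [nN sN]. destruct (simple_mor (proj1 hf) sN) as [h | h]; [left; auto | right].
  assert (hi : iso (subG N) (subG (imgS (proj1 hf) N))) by (apply iso_img; auto).
  split; auto. split.
  - apply (proj2 hf); auto.
  - apply simple_iso with (subG N); auto.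
Qed.

Lemma f_GS {G K : OGroup Om} (f : G -> K) (hf : normal_mor f) S x :
  smem (GS G S) x -> smem (GS K S) (f x).
Proof.
  rewrite GS_eq. revert x. apply genP_ind.
  - rewrite (mor1 (proj1 hf)). apply smem1.
  - intros a x [N [hN [hi ha]]] hx. rewrite (proj1 (proj1 hf)). apply smemM; auto.
    destruct (f_Z hf hN) as [h | [h1 h2]].
    + rewrite h; auto. apply smem1.
    + apply GS_in with (imgS (proj1 hf) N); auto.
      * apply iso_trans with (subG N); auto. apply iso_sym; auto.
      * exists a; auto.
Qed.

Section SS.
Variable G : OGroup Om.
Hypothesis hss : semisimple G.
Variable S : OGroup Om.

Lemma GC_comm a c : smem (GS G S) a -> smem (CS G S) c -> a ** c = c ** a.
Proof.
  rewrite GS_eq. intros ha hc. revert a c ha hc.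
  apply gen_comm; try apply Zgen_inv; try apply Zgen_act.
  intros a b [N [hN [hi hn]]] [N' [hN' [hi' hn']]].
  destruct (Z_meet hN hN') as [e | h]; auto. subst. contradiction.
Qed.

Lemma Z_in_genP (P : OSub G -> Prop) (M : OSub G) m : inZ M -> smem M m -> m <> oone G ->
  smem (genP G P) m -> exists N, inZ N /\ P N /\ iso (subG N) (subG M).
Proof.
  intros hM hm ne hP. destruct (genP_list hP) as [l [hl hml]].
  assert (hMl : inclS M (genL l)).
  { destruct (simple_meet (proj2 hM) (P := genL l)) as [h | h];
      [ intros; apply (genL_normal (l:=l)); auto | | auto ].
    exfalso. apply ne. apply h; auto. }
  assert (h := KL (l := l) (fun N hN => proj1 (hl N hN)) (proj2 hM)
      (fun x y _ hx => proj1 hM x y hx) hMl hm).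
  destruct (KL_weak h ne) as [N [h1 h2]]. exists N. destruct (hl N h1). auto.
Qed.

Lemma GC_triv x : smem (GS G S) x -> smem (CS G S) x -> x = oone G.
Proof.
  intros hx hx'. apply NNPP. intro ne.
  assert (hs : smem (genP G (fun _ => True)) x) by (rewrite <- soc_eq; apply hss).
  destruct (genP_list hs) as [l [hl hxl]].
  destruct (KL2 (l := l) (fun N hN => proj1 (hl N hN)) (L := capS (GS G S) (CS G S)))
    with (z := x) as [M [hM hML]]; auto.
  { apply normal_capS. apply GS_normal. apply CS_normal. }
  { split; auto. }
  destruct (simple_nontriv (proj2 hM)) as [m [hm nem]].
  destruct (hML m hm) as [h1 h2]. rewrite GS_eq in h1.
  destruct (Z_in_genP hM hm nem h1) as [N1 [_ [i1 j1]]].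
  destruct (Z_in_genP hM hm nem h2) as [N2 [_ [i2 j2]]].
  apply i2. apply iso_trans with (subG M); auto. apply iso_trans with (subG N1); auto.
  apply iso_sym; auto.
Qed.

Lemma GC_dec x : exists a c, smem (GS G S) a /\ smem (CS G S) c /\ x = a ** c.
Proof.
  assert (hs : smem (genP G (fun _ => True)) x) by (rewrite <- soc_eq; apply hss).
  revert x hs. apply genP_ind.
  - exists (oone G), (oone G). split; [apply smem1|split; [apply smem1|]]. rewrite omulg1; auto.
  - intros g x [N [hN [_ hg]]] [a [c [ha [hc ->]]]].
    destruct (classic (iso (subG N) S)) as [hi | hi].
    + exists (g ** a), c. split; [|split]; auto. apply smemM; auto. apply GS_in with N; auto.
      rewrite omulA; auto.
    + exists a, (g ** c). split; [|split]; auto. apply smemM; auto. apply CS_in with N; auto.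
      rewrite !omulA. f_equal. symmetry. apply GC_comm; auto. apply CS_in with N; auto.
Qed.

Lemma GC_uniq a1 c1 a2 c2 : smem (GS G S) a1 -> smem (CS G S) c1 -> smem (GS G S) a2 -> smem (CS G S) c2 ->
  a1 ** c1 = a2 ** c2 -> a1 = a2 /\ c1 = c2.
Proof. apply split_uniq. apply GC_triv. Qed.

Lemma GC_dec' x : exists p : G * G, smem (GS G S) (fst p) /\ smem (CS G S) (snd p) /\ x = fst p ** snd p.
Proof. destruct (GC_dec x) as [a [c h]]. exists (a, c). exact h. Qed.

Definition pS (x : G) : G := fst (proj1_sig (constructive_indefinite_description _ (GC_dec' x))).
Definition cS (x : G) : G := snd (proj1_sig (constructive_indefinite_description _ (GC_dec' x))).

Lemma pS_spec x : smem (GS G S) (pS x) /\ smem (CS G S) (cS x) /\ x = pS x ** cS x.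
Proof. unfold pS, cS. destruct (constructive_indefinite_description _ (GC_dec' x)); auto. Qed.

Lemma pS_GS a : smem (GS G S) a -> pS a = a.
Proof.
  intro ha. destruct (pS_spec a) as [h1 [h2 h3]].
  apply (GC_uniq h1 h2 ha (smem1 _)). rewrite omulg1. auto.
Qed.
Lemma pS_CS c : smem (CS G S) c -> pS c = oone G.
Proof.
  intro hc. destruct (pS_spec c) as [h1 [h2 h3]].
  apply (GC_uniq h1 h2 (smem1 _) hc). rewrite omul1g. auto.
Qed.
Lemma pS_mor : morphism pS.
Proof.
  split.
  - intros x y. destruct (pS_spec x) as [a1 [b1 e1]]. destruct (pS_spec y) as [a2 [b2 e2]].
    destruct (pS_spec (x ** y)) as [a3 [b3 e3]].
    apply (GC_uniq (a1 := pS (x ** y)) (c1 := cS (x ** y)) (a2 := pS x ** pS y) (c2 := cS x ** cS y));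
      auto; try (apply smemM; auto).
    rewrite <- e3. rewrite e1, e2 at 1. rewrite !omulA. f_equal. rewrite <- !omulA. f_equal.
    symmetry. apply GC_comm; auto.
  - intros w x. destruct (pS_spec x) as [a1 [b1 e1]]. destruct (pS_spec (oact w x)) as [a3 [b3 e3]].
    apply (GC_uniq (a1 := pS (oact w x)) (c1 := cS (oact w x)) (a2 := oact w (pS x)) (c2 := oact w (cS x)));
      auto; try (apply smemA; auto).
    rewrite <- e3, <- oactM, <- e1. auto.
Qed.

Definition piS (x : G) : subG (GS G S) := exist _ (pS x) (proj1 (pS_spec x)).
Lemma piS_mor : morphism piS.
Proof. split; intros; apply sig_ext; simpl; apply pS_mor. Qed.
Lemma piS_GS (a : subG (GS G S)) : piS (sv a) = a.
Proof. apply sig_ext. simpl. apply pS_GS. exact (proj2_sig a). Qed.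
Lemma piS_CS c : smem (CS G S) c -> piS c = oone (subG (GS G S)).
Proof. intro h. apply sig_ext. simpl. apply pS_CS; auto. Qed.
End SS.
End S6.
From Stdlib Require Import List ProofIrrelevance FunctionalExtensionality ClassicalEpsilon Classical PropExtensionality.
Set Implicit Arguments.
Unset Strict Implicit.

Section S7.
Context {Om : Type}.

Theorem part3a (G G' : OGroup Om) (hss : semisimple G) (f : G -> G') (S : OGroup Om) :
  normal_mor f -> exists g : subG (GS G S) -> subG (GS G' S),
    (forall x, sv (g x) = f (sv x)) /\ normal_mor g.
Proof.
  intro hf.
  exists (fun x => exist _ (f (sv x)) (f_GS hf (proj2_sig x))). split; [reflexivity|].
  split.
  - split; intros; apply sig_ext; simpl. apply (proj1 hf). apply (proj1 hf).
  - intros P nP z y' [p [hp <-]].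
    assert (nU : normal (up P)).
    { intros x y [q [hq <-]]. destruct (GC_dec hss S y) as [a [c [ha [hc ->]]]].
      rewrite conjg_mulg. exists (@conjg _ (subG (GS G S)) (exist _ a ha) q). split.
      - apply nP; auto.
      - change (conjg a (sv q) = conjg c (conjg a (sv q))). symmetry. apply conjg_comm.
        apply (GC_comm (S:=S)); auto. apply GS_normal. exact (proj2_sig q). }
    destruct ((proj2 hf) (up P) nU (f (sv p)) (sv y')) as [x0 [[p0 [hp0 <-]] e]].
    { exists (sv p). split; auto. exists p; auto. }
    exists p0. split; auto. apply sig_ext. simpl. rewrite e. reflexivity.
Qed.

Section P3b.
Variables G G' : OGroup Om.
Hypothesis hss : semisimple G.
Hypothesis hss' : semisimple G'.

Definition Sup := {S : OGroup Om | Supp G S /\ Supp G' S}.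

Lemma soc_all {X : OGroup Om} (h : semisimple X) x : smem (genP X (fun _ => True)) x.
Proof. rewrite <- soc_eq. apply h. Qed.

Lemma part3b_inj (f1 f2 : G -> G') : normal_mor f1 -> normal_mor f2 ->
  (forall (s : Sup) (a : subG (GS G (proj1_sig s))), f1 (sv a) = f2 (sv a)) ->
  forall x, f1 x = f2 x.
Proof.
  intros h1 h2 h x. generalize (soc_all hss x). revert x. apply genP_ind.
  - rewrite (mor1 (proj1 h1)), (mor1 (proj1 h2)). auto.
  - intros g x [N [hN [_ hg]]] hx. rewrite (proj1 (proj1 h1)), (proj1 (proj1 h2)), hx. f_equal.
    pose (S0 := rep (subG N)).
    assert (hS0 : Supp G S0) by (exists N; auto).
    assert (hgS : smem (GS G S0) g) by (apply GS_in with N; auto; apply rep_iso).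
    destruct (classic (Supp G' S0)) as [h' | h'].
    + apply (h (exist _ S0 (conj hS0 h')) (exist _ g hgS)).
    + assert (triv : forall f (hf : normal_mor f), f g = oone G').
      { intros f hf. destruct (f_Z hf hN) as [e | [hZ hi]]; auto.
        exfalso. apply h'. exists (imgS (proj1 hf) N). split; auto.
        apply rep_eq. apply iso_sym; auto. }
      rewrite (triv _ h1), (triv _ h2). auto.
Qed.

Lemma triv_all z : (forall T, Supp G' T -> pS hss' T z = oone G') -> z = oone G'.
Proof.
  intro hz. apply NNPP. intro ne.
  assert (L : OSub G').
  { refine (@MkOSub _ G' (fun w => forall T, Supp G' T -> pS hss' T w = oone G') _ _ _ _).
    - intros T _. apply (mor1 (pS_mor hss' T)).
    - intros x y hx hy T hT. rewrite (proj1 (pS_mor hss' T)), hx, hy; auto. apply omul1g.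
    - intros x hx T hT. rewrite (morV (pS_mor hss' T)), hx; auto. apply oinv1.
    - intros w x hx T hT. rewrite (proj2 (pS_mor hss' T)), hx; auto. apply oact1. }
  clear L.
  pose (L := @MkOSub _ G' (fun w => forall T, Supp G' T -> pS hss' T w = oone G')
    (fun T _ => mor1 (pS_mor hss' T))
    (fun x y hx hy T hT => eq_trans (proj1 (pS_mor hss' T) x y)
        (eq_trans (f_equal2 _ (hx T hT) (hy T hT)) (omul1g _)))
    (fun x hx T hT => eq_trans (morV (pS_mor hss' T) x) (eq_trans (f_equal _ (hx T hT)) (oinv1 _)))
    (fun w x hx T hT => eq_trans (proj2 (pS_mor hss' T) w x) (eq_trans (f_equal _ (hx T hT)) (oact1 _ _)))).
  assert (nL : normal L).
  { intros x y hx T hT. change (pS hss' T (conjg y x) = oone G').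
    rewrite (mor_conj (pS_mor hss' T)), (hx T hT). apply conjg_one. }
  destruct (genP_list (soc_all hss' z)) as [l [hl hzl]].
  destruct (KL2 (l := l) (fun N hN => proj1 (hl N hN)) nL (z := z)) as [M [hM hML]]; auto.
  destruct (simple_nontriv (proj2 hM)) as [m [hm nem]].
  pose (T := rep (subG M)).
  assert (hT : Supp G' T) by (exists M; auto).
  assert (hmT : smem (GS G' T) m) by (apply GS_in with M; auto; apply rep_iso).
  apply nem. rewrite <- (pS_GS hss' hmT). apply (hML m hm T hT).
Qed.

Section Surj.
Local Unset Implicit Arguments.
Variable t : forall s : Sup, {g : subG (GS G (proj1_sig s)) -> subG (GS G' (proj1_sig s)) | normal_mor g}.
Let tt := fun (s : Sup) => proj1_sig (t s).
Let ht (s : Sup) : normal_mor (tt s) := proj2_sig (t s).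

Definition cond (x : G) (y : G') : Prop :=
  (forall s : Sup, pS hss' (proj1_sig s) y = sv (tt s (piS hss (proj1_sig s) x))) /\
  (forall T, Supp G' T -> ~ Supp G T -> pS hss' T y = oone G').

Lemma tt1 s : tt s (oone _) = oone _.
Proof. apply (mor1 (proj1 (ht s))). Qed.

Lemma good x : exists y, cond x y.
Proof.
  generalize (soc_all hss x). revert x. apply genP_ind.
  - exists (oone G'). split.
    + intro s. rewrite (mor1 (pS_mor hss' _)), (mor1 (piS_mor hss _)), tt1. reflexivity.
    + intros. apply (mor1 (pS_mor hss' _)).
  - intros g x [N [hN [_ hg]]] [y hy].
    pose (S0 := rep (subG N)).
    assert (hS0 : Supp G S0) by (exists N; auto).
    assert (hgS : smem (GS G S0) g) by (apply GS_in with N; auto; apply rep_iso).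
    assert (hgC : forall T, (Supp G T \/ Supp G' T) -> T <> S0 -> smem (CS G T) g).
    { intros T hT ne. apply CS_in with N; auto. intro hi. apply ne.
      destruct hT as [hT | hT]; symmetry; eapply Supp_iso_eq; eauto. }
    destruct (classic (Supp G' S0)) as [h' | h'].
    + pose (s0 := exist _ S0 (conj hS0 h') : Sup).
      pose (a0 := exist _ g hgS : subG (GS G (proj1_sig s0))).
      exists (sv (tt s0 a0) ** y). split.
      * intro s. rewrite (proj1 (pS_mor hss' _)), (proj1 hy s), (proj1 (piS_mor hss _)).
        rewrite (proj1 (proj1 (ht s))). change (sv (?a ** ?b)) with (sv a ** sv b). f_equal.
        destruct (classic (proj1_sig s = S0)) as [e | ne].
        -- assert (es : s = s0) by (apply sig_ext; auto). subst s.
           rewrite (pS_GS hss' (a := sv (tt s0 a0)) (proj2_sig (tt s0 a0))). f_equal. f_equal.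
           symmetry. apply (piS_GS hss a0).
        -- rewrite (pS_CS hss'). rewrite (piS_CS hss), tt1. reflexivity.
           ++ apply hgC; auto. left. apply (proj2_sig s).
           ++ apply (GS_CS (S := S0)). apply (Supp_neq hS0 (proj1 (proj2_sig s))). auto.
              exact (proj2_sig (tt s0 a0)).
      * intros T hT hnT. rewrite (proj1 (pS_mor hss' _)), (proj2 hy T hT hnT), omulg1.
        apply (pS_CS hss'). apply (GS_CS (S := S0)). apply (Supp_neq hS0 hT).
        intro e; apply hnT; rewrite <- e; auto.
        exact (proj2_sig (tt s0 a0)).
    + exists y. split.
      * intro s. rewrite (proj1 hy s), (proj1 (piS_mor hss _)), (piS_CS hss (c := g)), omul1g. reflexivity.
        apply hgC. right. apply (proj2_sig s). intro e. apply h'. rewrite <- e. apply (proj2_sig s).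
      * apply hy.
Qed.

Lemma cond_uniq x y1 y2 : cond x y1 -> cond x y2 -> y1 = y2.
Proof.
  intros [a1 b1] [a2 b2].
  assert (e : y1 ** oinv y2 = oone G').
  { apply triv_all. intros T hT. rewrite (proj1 (pS_mor hss' T)), (morV (pS_mor hss' T)).
    destruct (classic (Supp G T)) as [h | h].
    - pose (s := exist _ T (conj h hT) : Sup).
      change T with (proj1_sig s). rewrite (a1 s), (a2 s). apply omulgV.
    - rewrite (b1 T hT h), (b2 T hT h). rewrite oinv1. apply omulg1. }
  apply mul_eq1 in e. rewrite inv_inv in e. auto.
Qed.

Definition fS (x : G) : G' := proj1_sig (constructive_indefinite_description _ (good x)).
Lemma fS_cond x : cond x (fS x).
Proof. unfold fS. destruct (constructive_indefinite_description _ (good x)); auto. Qed.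

Lemma fS_mor : morphism fS.
Proof.
  split.
  - intros x1 x2. apply (cond_uniq (x1 ** x2)). apply fS_cond.
    destruct (fS_cond x1) as [a1 b1]. destruct (fS_cond x2) as [a2 b2]. split.
    + intro s. rewrite (proj1 (pS_mor hss' _)), a1, a2, (proj1 (piS_mor hss _)), (proj1 (proj1 (ht s))).
      reflexivity.
    + intros T hT hnT. rewrite (proj1 (pS_mor hss' _)), (b1 T hT hnT), (b2 T hT hnT). apply omulg1.
  - intros w x. apply (cond_uniq (oact w x)). apply fS_cond.
    destruct (fS_cond x) as [a1 b1]. split.
    + intro s. rewrite (proj2 (pS_mor hss' _)), a1, (proj2 (piS_mor hss _)), (proj2 (proj1 (ht s))).
      reflexivity.
    + intros T hT hnT. rewrite (proj2 (pS_mor hss' _)), (b1 T hT hnT). apply oact1.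
Qed.

Lemma fS_ext (s : Sup) (a : subG (GS G (proj1_sig s))) : fS (sv a) = sv (tt s a).
Proof.
  apply (cond_uniq (sv a)). apply fS_cond. split.
  - intro s'. destruct (classic (proj1_sig s' = proj1_sig s)) as [e | ne].
    + assert (es : s' = s) by (apply sig_ext; auto). subst s'.
      rewrite (pS_GS hss' (a := sv (tt s a)) (proj2_sig (tt s a))), (piS_GS hss a). reflexivity.
    + rewrite (pS_CS hss'), (piS_CS hss), tt1. reflexivity.
      * apply (GS_CS (S := proj1_sig s)). apply (Supp_neq (proj1 (proj2_sig s)) (proj1 (proj2_sig s'))). auto.
        exact (proj2_sig a).
      * apply (GS_CS (S := proj1_sig s)). apply (Supp_neq (proj2 (proj2_sig s)) (proj2 (proj2_sig s'))). auto.
        exact (proj2_sig (tt s a)).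
  - intros T hT hnT. apply (pS_CS hss'). apply (GS_CS (S := proj1_sig s)).
    apply (Supp_neq (proj2 (proj2_sig s)) hT). intro e. apply hnT. rewrite <- e. apply (proj2_sig s).
    exact (proj2_sig (tt s a)).
Qed.

Lemma fS_gconj (N : OSub G) (nN : normal N) (N' : OSub G') (hN' : inZ N') g n :
  smem N' g -> smem N n -> exists n', smem N n' /\ fS n' = conjg g (fS n).
Proof.
  intros hg hn.
  pose (T := rep (subG N')).
  assert (hT' : Supp G' T) by (exists N'; auto).
  assert (hgT : smem (GS G' T) g) by (apply GS_in with N'; auto; apply rep_iso).
  destruct (pS_spec hss' T (fS n)) as [hu [hc ec]].
  assert (gc : g ** cS hss' T (fS n) = cS hss' T (fS n) ** g) by (apply (GC_comm (S := T)); auto).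
  destruct (classic (Supp G T)) as [hT | hT].
  - pose (s := exist _ T (conj hT hT') : Sup).
    assert (eu : pS hss' T (fS n) = sv (tt s (piS hss T n))) by apply (proj1 (fS_cond n) s).
    pose (R := imgF (mor_comp (proj1 (ht s)) (mor_sv _))).
    assert (nR : forall x y, smem R x -> smem N' y -> smem R (conjg y x)).
    { intros x y [a <-] hy.
      assert (hyT : smem (GS G' T) y) by (apply GS_in with N'; auto; apply rep_iso).
      destruct ((proj2 (ht s)) (fullS _) (fun _ _ _ => I) (tt s a) (exist _ y hyT)) as [b [_ eb]].
      { exists a; split; auto. exact I. }
      exists b. simpl. rewrite eb. reflexivity. }
    destruct (simple_meet (proj2 hN') (P := R) nR) as [h | h].
    + exists n. split; auto.
      assert (hcomm : g ** pS hss' T (fS n) = pS hss' T (fS n) ** g).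
      { apply (comm_weak (A := N') (B := R)); auto.
        - intros x y hx _. apply (proj1 hN'); auto.
        - rewrite eu. exists (piS hss T n). reflexivity. }
      rewrite ec at 2. rewrite conjg_mul, !conjg_comm; auto.
    + destruct (h g hg) as [a ea].
      exists (conjg (sv a) n). split. apply nN; auto.
      rewrite (mor_conj fS_mor). f_equal. rewrite <- ea. apply (fS_ext s a).
  - assert (eu : pS hss' T (fS n) = oone G') by apply (proj2 (fS_cond n) T hT' hT).
    exists n. split; auto.
    assert (ef : fS n = cS hss' T (fS n)) by (rewrite ec at 1; rewrite eu; apply omul1g).
    rewrite ef. symmetry. apply conjg_comm. symmetry. exact gc.
Qed.

Lemma fS_normal : normal_mor fS.
Proof.
  split. apply fS_mor.
  intros N nN z y [n [hn <-]].
  cut (forall y, smem (genP G' (fun _ => True)) y ->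
         forall n, smem N n -> exists n', smem N n' /\ fS n' = conjg y (fS n)).
  { intro h. destruct (h y (soc_all hss' y) n hn) as [n' [h1 h2]]. exists n'; auto. }
  apply (genP_ind (Q := fun y => forall n, smem N n -> exists n', smem N n' /\ fS n' = conjg y (fS n))).
  - intros n0 h0. exists n0. split; auto. rewrite conjg1. auto.
  - intros g y0 [N' [hN' [_ hg]]] IH n0 h0.
    destruct (fS_gconj N nN N' hN' g n0 hg h0) as [n1 [h1 e1]].
    destruct (IH n1 h1) as [n2 [h2 e2]]. exists n2. split; auto.
    rewrite conjg_mulg, <- e1. auto.
Qed.
End Surj.

Theorem part3b (Phi : {f : G -> G' | normal_mor f} ->
                    forall s : {S : OGroup Om | Supp G S /\ Supp G' S},
                      {g : subG (GS G (proj1_sig s)) -> subG (GS G' (proj1_sig s)) |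
                         normal_mor g}) :
  (forall f s x, sv (proj1_sig (Phi f s) x) = proj1_sig f (sv x)) -> bij Phi.
Proof.
  intro hPhi. split.
  - intros [f1 h1] [f2 h2] e. apply sig_ext. simpl. apply functional_extensionality.
    apply part3b_inj; auto. intros s a.
    pose proof (f_equal (fun F => sv (proj1_sig (F s) a)) e) as e'. cbv beta in e'.
    rewrite !hPhi in e'. exact e'.
  - intro t. exists (exist _ (fS t) (fS_normal t)).
    apply functional_extensionality_dep. intro s. apply sig_ext.
    apply functional_extensionality. intro a. apply sig_ext.
    change (sv (proj1_sig (Phi (exist _ (fS t) (fS_normal t)) s) a) = sv (proj1_sig (t s) a)).
    rewrite hPhi. simpl. apply (fS_ext t s a).
Qed.

End P3b.
End S7.
From Stdlib Require Import List ProofIrrelevance FunctionalExtensionality ClassicalEpsilon Classical PropExtensionality.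
Unset Implicit Arguments.

Section S8.
Context {Om : Type}.
Variable I : Type.
Variable F : I -> OGroup Om.

Definition sfun (i : I) (h : F i) : forall j, F j :=
  fun j => match excluded_middle_informative (i = j) with
           | left e => eq_rect i F h j e
           | right _ => oone (F j)
           end.

Lemma sfun_fs i h : finsupp (sfun i h).
Proof.
  exists (i :: nil). intros j hj. unfold sfun.
  destruct (excluded_middle_informative (i = j)) as [e | ne]; auto.
  exfalso. apply hj. left. auto.
Qed.

Definition single (i : I) (h : F i) : dsum F := exist _ (sfun i h) (sfun_fs i h).

Lemma single_i i h : dcomp (single i h) i = h.
Proof.
  unfold dcomp, single. simpl. unfold sfun.
  destruct (excluded_middle_informative (i = i)) as [e | ne].
  - rewrite (proof_irrelevance _ e eq_refl). reflexivity.
  - exfalso; auto.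
Qed.
Lemma single_j i h j : i <> j -> dcomp (single i h) j = oone (F j).
Proof.
  intro ne. unfold dcomp, single. simpl. unfold sfun.
  destruct (excluded_middle_informative (i = j)) as [e | _]; auto. contradiction.
Qed.

Lemma dsum_ext (x y : dsum F) : (forall i, dcomp x i = dcomp y i) -> x = y.
Proof. intro h. apply sig_ext. apply functional_extensionality_dep. exact h. Qed.

Lemma dcomp_mul (x y : dsum F) i : dcomp (x ** y) i = dcomp x i ** dcomp y i.
Proof. reflexivity. Qed.
Lemma dcomp_one i : dcomp (oone (dsum F)) i = oone (F i).
Proof. reflexivity. Qed.

Definition rmfun (a : I) (x : dsum F) : forall j, F j :=
  fun j => match excluded_middle_informative (a = j) with
           | left _ => oone (F j)
           | right _ => dcomp x j
           end.

Lemma dsum_ind (R : dsum F -> Prop) :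
  R (oone (dsum F)) -> (forall x y, R x -> R y -> R (x ** y)) -> (forall i h, R (single i h)) ->
  forall x, R x.
Proof.
  intros h1 hM hS x.
  destruct (proj2_sig x) as [l hl].
  revert x hl. induction l as [|a l IH]; intros x hl.
  - replace x with (oone (dsum F)); auto. apply dsum_ext. intro i. symmetry. apply hl. simpl; auto.
  - assert (fs : finsupp (rmfun a x)).
    { exists l. intros j hj. unfold rmfun. destruct (excluded_middle_informative (a = j)); auto.
      apply hl. intros [e | e]; auto. }
    pose (x' := exist _ (rmfun a x) fs : dsum F).
    replace x with (x' ** single a (dcomp x a)).
    + apply hM; auto. apply IH. intros j hj. simpl. unfold rmfun.
      destruct (excluded_middle_informative (a = j)); auto. apply hl. intros [e | e]; auto.
    + apply dsum_ext. intro j. rewrite dcomp_mul. unfold x', dcomp at 1. simpl. unfold rmfun.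
      destruct (excluded_middle_informative (a = j)) as [e | ne].
      * subst j. rewrite omul1g. exact (single_i a (dcomp x a)).
      * change (dcomp x j ** dcomp (single a (dcomp x a)) j = dcomp x j).
        rewrite single_j; auto. apply omulg1.
Qed.

Lemma single_mul i h1 h2 : single i (h1 ** h2) = single i h1 ** single i h2.
Proof.
  apply dsum_ext. intro j. rewrite dcomp_mul. destruct (classic (i = j)) as [e | ne].
  - subst. rewrite !single_i. auto.
  - rewrite !single_j; auto. symmetry; apply omulg1.
Qed.

End S8.
Arguments sfun {Om I F} i h j.
Arguments single {Om I F} i h.
Arguments single_i {Om I F} i h.
Arguments single_j {Om I F} i h j _.
Arguments dsum_ext {Om I F} x y _.
Arguments dsum_ind {Om I F} R _ _ _ x.
Arguments single_mul {Om I F} i h1 h2.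

Section S8b.
Context {Om : Type}.

Lemma canon_single {X : OGroup Om} {I : Type} (K : I -> OSub X) th :
  canonical_mor K th -> forall i h, th (single (F := fun i => subG (K i)) i h) = sv h.
Proof.
  intros [_ hc] i h. rewrite (hc _ i). rewrite single_i; auto.
  intros j ne. apply (single_j (F := fun i => subG (K i)) i h j). auto.
Qed.

Lemma canon_eq {X : OGroup Om} {I : Type} (K : I -> OSub X) th1 th2 :
  canonical_mor K th1 -> canonical_mor K th2 -> forall x, th1 x = th2 x.
Proof.
  intros h1 h2. apply dsum_ind.
  - rewrite (mor1 (proj1 h1)), (mor1 (proj1 h2)). auto.
  - intros x y e1 e2. rewrite (proj1 (proj1 h1)), (proj1 (proj1 h2)), e1, e2. auto.
  - intros i h. rewrite (canon_single _ _ h1), (canon_single _ _ h2). auto.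
Qed.

Lemma canon_ind {X : OGroup Om} {I : Type} (K : I -> OSub X) th (P : X -> Prop) :
  canonical_mor K th -> P (oone X) -> (forall x y, P x -> P y -> P (x ** y)) ->
  (forall i (h : subG (K i)), P (sv h)) -> forall x, P (th x).
Proof.
  intros hc h1 hM hS. apply dsum_ind.
  - rewrite (mor1 (proj1 hc)). auto.
  - intros x y e1 e2. rewrite (proj1 (proj1 hc)). auto.
  - intros i h. rewrite (canon_single _ _ hc). auto.
Qed.
End S8b.
From Stdlib Require Import List ProofIrrelevance FunctionalExtensionality ClassicalEpsilon Classical PropExtensionality.
Unset Implicit Arguments.

Section S9.
Context {Om : Type}.
Variable G : OGroup Om.
Variable I : Type.
Variable H : I -> OSub G.
Hypothesis hCC : CC H.
Variable theta : dsum (fun i => subG (H i)) -> G.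
Hypothesis hcan : canonical_mor H theta.
Hypothesis hbij : bij theta.

Definition thi (g : G) : dsum (fun i => subG (H i)) :=
  proj1_sig (constructive_indefinite_description _ (proj2 hbij g)).
Lemma thi_r g : theta (thi g) = g.
Proof. unfold thi. destruct (constructive_indefinite_description _ (proj2 hbij g)); auto. Qed.
Lemma thi_l x : thi (theta x) = x.
Proof. apply (proj1 hbij). apply thi_r. Qed.
Lemma thi_mor : morphism thi.
Proof. eapply mor_inv. exact (proj1 hcan). exact thi_l. exact thi_r. Qed.

Definition pi (i : I) (g : G) : subG (H i) := dcomp (thi g) i.
Lemma pi_mor i : morphism (pi i).
Proof. split; intros; unfold pi. rewrite (proj1 thi_mor). reflexivity. rewrite (proj2 thi_mor). reflexivity. Qed.
Lemma thi_single i (h : subG (H i)) : thi (sv h) = single i h.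
Proof. rewrite <- (canon_single H theta hcan i h). apply thi_l. Qed.
Lemma pi_sv i (h : subG (H i)) : pi i (sv h) = h.
Proof. unfold pi. rewrite thi_single. apply (single_i (F := fun i => subG (H i))). Qed.
Lemma pi_sv_j i j (h : subG (H i)) : i <> j -> pi j (sv h) = oone _.
Proof. intro ne. unfold pi. rewrite thi_single. apply (single_j (F := fun i => subG (H i))). auto. Qed.
Lemma thi_triv g : (forall i, pi i g = oone _) -> g = oone G.
Proof.
  intro h. rewrite <- (thi_r g). replace (thi g) with (oone (dsum (fun i => subG (H i)))).
  apply (mor1 (proj1 hcan)). apply dsum_ext. intro i. symmetry. apply h.
Qed.

Lemma dec_i i g : exists h c, smem (H i) h /\ (forall h', smem (H i) h' -> c ** h' = h' ** c) /\ g = h ** c.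
Proof.
  rewrite <- (thi_r g).
  apply (canon_ind H theta (fun g => exists h c, smem (H i) h /\ (forall h', smem (H i) h' -> c ** h' = h' ** c) /\ g = h ** c) hcan).
  - exists (oone G), (oone G). split; [apply smem1|split]. intros; symmetry; apply comm_1. rewrite omulg1; auto.
  - intros x y [h1 [c1 [a1 [b1 e1]]]] [h2 [c2 [a2 [b2 e2]]]]. exists (h1 ** h2), (c1 ** c2).
    split; [apply smemM; auto|split].
    + intros h' hh'. symmetry. apply comm_mul; symmetry; auto.
    + subst. rewrite !omulA. f_equal. rewrite <- !omulA. f_equal. auto.
  - intros j h. destruct (classic (j = i)) as [e | ne].
    + subst j. exists (sv h), (oone G). split; [exact (proj2_sig h)|split].
      intros; symmetry; apply comm_1. rewrite omulg1; auto.
    + exists (oone G), (sv h). split; [apply smem1|split].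
      intros h' hh'. apply (hCC i j). intro e; apply ne; auto. exact hh'. exact (proj2_sig h).
      rewrite omul1g; auto.
Qed.

Lemma normal_up i (P : OSub (subG (H i))) : normal P -> normal (up P).
Proof.
  intros nP x y [p [hp <-]]. destruct (dec_i i y) as [h [c [hh [hc ->]]]].
  rewrite conjg_mulg. exists (@conjg _ (subG (H i)) (exist _ h hh) p). split.
  - apply nP; auto.
  - change (conjg h (sv p) = conjg c (conjg h (sv p))). symmetry. apply conjg_comm.
    symmetry. apply hc. apply (smemM (smemM (smemV hh) (proj2_sig p)) hh).
Qed.

Lemma inZ_up i (N : OSub (subG (H i))) : inZ N -> inZ (up N).
Proof.
  intros [nN sN]. split. apply normal_up; auto.
  apply simple_iso with (subG N); auto. apply iso_sym, iso_up.
Qed.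

Lemma inZ_pi i (N : OSub G) : inZ N ->
  (forall n, smem N n -> pi i n = oone _) \/
  (inZ (imgS (pi_mor i) N) /\ iso (subG N) (subG (imgS (pi_mor i) N))).
Proof.
  intros [nN sN]. destruct (simple_mor (M:=N) (pi_mor i) sN) as [h | h]; [left; auto | right].
  assert (hi : iso (subG N) (subG (imgS (pi_mor i) N))) by (apply iso_img; auto).
  split; auto. split.
  - intros x y [n [hn <-]]. exists (conjg (sv y) n). split. apply nN; auto.
    rewrite (mor_conj (pi_mor i)), pi_sv. reflexivity.
  - apply simple_iso with (subG N); auto.
Qed.

Theorem part1d (X : OGroup Om) : Supp G X <-> exists i, Supp (subG (H i)) X.
Proof.
  split.
  - intros [N [hN <-]]. destruct (simple_nontriv (proj2 hN)) as [n [hn ne]].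
    assert (hi : exists i, pi i n <> oone _).
    { apply NNPP. intro hno. apply ne. apply thi_triv. intro i. apply NNPP. intro h. apply hno. exists i; auto. }
    destruct hi as [i hi]. exists i.
    destruct (inZ_pi i N hN) as [h | [hZ hiso]].
    + exfalso; apply hi; auto.
    + exists (imgS (pi_mor i) N). split; auto. symmetry. apply rep_eq; auto.
  - intros [i [N [hN <-]]]. exists (up N). split. apply inZ_up; auto. apply rep_eq, iso_up.
Qed.

Section Gen.
Variable Q : OGroup Om -> Prop.
Hypothesis hQ : forall A B, iso A B -> Q A -> Q B.
Variable Fs : forall X : OGroup Om, OSub X.
Hypothesis hF : forall X, Fs X = genP X (fun N => Q (subG N)).

Lemma p1a i x : smem (up (Fs (subG (H i)))) x -> smem (Fs G) x.
Proof.
  intros [y [hy <-]]. rewrite hF in hy |- *.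
  apply (gen_min (K := restr (H i) (genP G (fun N => Q (subG N)))) hy).
  intros a [N [hN [hq ha]]]. change (smem (genP G (fun N => Q (subG N))) (sv a)).
  apply (genP_in (N := up N)). apply inZ_up; auto. apply (hQ (subG N)); auto. apply iso_sym, iso_up.
  exists a; auto.
Qed.

Lemma p1b : CC (fun i => restr (Fs G) (up (Fs (subG (H i))))).
Proof.
  intros i j ne x y [x0 [_ ex]] [y0 [_ ey]]. apply sig_ext. simpl.
  change (sv y ** sv x = sv x ** sv y). apply (hCC i j ne).
  rewrite <- ex. exact (proj2_sig x0). rewrite <- ey. exact (proj2_sig y0).
Qed.

Definition K' (i : I) : OSub (subG (Fs G)) := restr (Fs G) (up (Fs (subG (H i)))).

Lemma inH i (z : subG (K' i)) : smem (H i) (sv (sv z)).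
Proof. destruct (proj2_sig z) as [y0 [_ e]]. unfold sv in *. rewrite <- e. exact (proj2_sig y0). Qed.

Definition mapc (x : dsum (fun i => subG (K' i))) (i : I) : subG (H i) :=
  exist (smem (H i)) (sv (sv (dcomp x i))) (inH i (dcomp x i)).

Lemma mapc_fs x : finsupp (mapc x).
Proof.
  destruct (proj2_sig x) as [l hl]. exists l. intros j hj. apply sig_ext. simpl.
  unfold dcomp. rewrite (hl j hj). reflexivity.
Qed.

Definition map (x : dsum (fun i => subG (K' i))) : dsum (fun i => subG (H i)) :=
  exist _ (mapc x) (mapc_fs x).

Lemma map_mor : morphism map.
Proof. split; intros; apply dsum_ext; intro i; apply sig_ext; reflexivity. Qed.

Lemma map_can x i : (forall j, j <> i -> dcomp x j = oone _) -> theta (map x) = sv (sv (dcomp x i)).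
Proof.
  intro h. rewrite ((proj2 hcan) (map x) i). reflexivity.
  intros j ne. apply sig_ext. simpl. unfold mapc. simpl. rewrite (h j ne). reflexivity.
Qed.

Lemma th0_in x : smem (Fs G) (theta (map x)).
Proof.
  apply (dsum_ind (fun x => smem (Fs G) (theta (map x)))).
  - rewrite (mor1 map_mor), (mor1 (proj1 hcan)). apply smem1.
  - intros y z h1 h2. rewrite (proj1 map_mor), (proj1 (proj1 hcan)). apply smemM; auto.
  - intros i h. rewrite (map_can _ i). rewrite (single_i (F := fun i => subG (K' i))). exact (proj2_sig (sv h)).
    intros j ne. apply (single_j (F := fun i => subG (K' i))). auto.
Qed.

Definition th0 (x : dsum (fun i => subG (K' i))) : subG (Fs G) := exist _ (theta (map x)) (th0_in x).

Lemma th0_can : canonical_mor K' th0.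
Proof.
  split.
  - split.
    + intros x y. apply sig_ext. change (theta (map (x ** y)) = theta (map x) ** theta (map y)).
      rewrite (proj1 map_mor), (proj1 (proj1 hcan)). reflexivity.
    + intros w x. apply sig_ext. change (theta (map (oact w x)) = oact w (theta (map x))).
      rewrite (proj2 map_mor), (proj2 (proj1 hcan)). reflexivity.
  - intros x i hx. apply sig_ext. simpl. apply map_can. auto.
Qed.

Lemma pi_F i g : smem (Fs G) g -> smem (Fs (subG (H i))) (pi i g).
Proof.
  rewrite !hF. revert g. apply genP_ind.
  - rewrite (mor1 (pi_mor i)). apply smem1.
  - intros a x [N [hN [hq ha]]] hx. rewrite (proj1 (pi_mor i)). apply smemM; auto.
    destruct (inZ_pi i N hN) as [h | [hZ hiso]].
    + rewrite h; auto. apply smem1.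
    + apply (genP_in (N := imgS (pi_mor i) N)); auto. apply (hQ (subG N)); auto. exists a; auto.
Qed.

Lemma p1c_bij th : canonical_mor K' th -> bij th.
Proof.
  intro hth. assert (e : forall x, th x = th0 x) by (apply (canon_eq K'); auto; apply th0_can).
  split.
  - intros x y exy. rewrite !e in exy. apply (f_equal (@sv _ _ _)) in exy. simpl in exy.
    apply (proj1 hbij) in exy. apply dsum_ext. intro i.
    apply (f_equal (fun z => sv (dcomp z i))) in exy. simpl in exy.
    apply sig_ext, sig_ext. exact exy.
  - intro y.
    assert (hc : forall i, smem (Fs (subG (H i))) (pi i (sv y))) by (intro i; apply pi_F; exact (proj2_sig y)).
    assert (hup : forall i, smem (up (Fs (subG (H i)))) (sv (pi i (sv y)))) by (intro i; exists (pi i (sv y)); auto).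
    pose (xf := (fun i => exist (smem (K' i)) (exist (smem (Fs G)) (sv (pi i (sv y))) (p1a i _ (hup i))) (hup i))
                : forall i, subG (K' i)).
    assert (fs : finsupp (F := fun i => subG (K' i)) xf).
    { destruct (proj2_sig (thi (sv y))) as [l hl]. exists l. intros j hj. apply sig_ext, sig_ext. simpl.
      unfold pi, dcomp. rewrite (hl j hj). reflexivity. }
    exists (exist _ xf fs). rewrite e. apply sig_ext. simpl.
    transitivity (theta (thi (sv y))); [|apply thi_r]. f_equal.
    apply dsum_ext. intro i. apply sig_ext. reflexivity.
Qed.

Theorem part1_gen :
  (forall i x, smem (up (Fs (subG (H i)))) x -> smem (Fs G) x) /\
  CC (fun i => restr (Fs G) (up (Fs (subG (H i))))) /\
  (exists th, canonical_mor (fun i => restr (Fs G) (up (Fs (subG (H i))))) th) /\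
  (forall th, canonical_mor (fun i => restr (Fs G) (up (Fs (subG (H i))))) th -> bij th).
Proof.
  split; [exact p1a|split; [exact p1b|split]].
  - exists th0. exact th0_can.
  - exact p1c_bij.
Qed.
End Gen.
End S9.
From Stdlib Require Import List ProofIrrelevance FunctionalExtensionality ClassicalEpsilon Classical PropExtensionality.
Theorem mainTheorem2 (Om : Type) :
  (* (1) *)
  (forall (G : OGroup Om) (I : Type) (H : I -> OSub G),
     CC H ->
     (exists th, canonical_mor H th /\ bij th) ->
     (* (a),(b),(c) for the socles *)
     ((forall i x, smem (up (soc (subG (H i)))) x -> smem (soc G) x) /\
      CC (fun i => restr (soc G) (up (soc (subG (H i))))) /\
      (exists th, canonical_mor (fun i => restr (soc G) (up (soc (subG (H i))))) th) /\
      (forall th, canonical_mor (fun i => restr (soc G) (up (soc (subG (H i))))) th ->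
                  bij th)) /\
     (* (a),(b),(c) for the S-components *)
     (forall S : OGroup Om, simple S ->
      (forall i x, smem (up (GS (subG (H i)) S)) x -> smem (GS G S) x) /\
      CC (fun i => restr (GS G S) (up (GS (subG (H i)) S))) /\
      (exists th, canonical_mor (fun i => restr (GS G S) (up (GS (subG (H i)) S))) th) /\
      (forall th, canonical_mor (fun i => restr (GS G S) (up (GS (subG (H i)) S))) th ->
                  bij th)) /\
     (* (d) *)
     (forall X : OGroup Om, Supp G X <-> exists i, Supp (subG (H i)) X))
  /\
  (* (2) *)
  (forall (G S : OGroup Om), simple S ->
     (forall x : G, smem (GS G S) x <-> smem (up (GS (subG (soc G)) S)) x) /\
     (forall X : OGroup Om, Supp G X <-> Supp (subG (soc G)) X))
  /\
  (* (3) *)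
  (forall (G G' : OGroup Om), semisimple G -> semisimple G' ->
     (* (a) *)
     (forall (f : G -> G') (S : OGroup Om), normal_mor f -> simple S ->
        exists g : subG (GS G S) -> subG (GS G' S),
          (forall x, sv (g x) = f (sv x)) /\ normal_mor g) /\
     (* (b) : Phi is a bijection, Phi f = t  iff  each t_S is the S-component of f *)
     (forall (Phi : {f : G -> G' | normal_mor f} ->
                    forall s : {S : OGroup Om | Supp G S /\ Supp G' S},
                      {g : subG (GS G (proj1_sig s)) -> subG (GS G' (proj1_sig s)) |
                         normal_mor g}),
        (forall f s x, sv (proj1_sig (Phi f s) x) = proj1_sig f (sv x)) ->
        bij Phi)).
Proof.
split; [|split].
- intros G I H hCC [theta [hcan hbij]]. split; [|split].
  + apply (part1_gen G I H hCC theta hcan hbij (fun _ => True) (fun _ _ _ _ => Logic.I) (@soc Om)).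
    intro X. exact (soc_eq X).
  + intros S _. apply (part1_gen G I H hCC theta hcan hbij (fun A => iso A S)
      (fun A B h1 h2 => iso_trans (iso_sym h1) h2) (fun X => GS X S)).
    intro X. exact (GS_eq X S).
  + intro X. exact (part1d G I H hCC theta hcan hbij X).
- intros G S _. apply part2.
- intros G G' hss hss'. split.
  + intros f S hf _. apply part3a; auto.
  + intros Phi hPhi. apply part3b; auto.
Qed.
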